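(* Let $a\in(1,\infty)$ and $\gamma\in\mathbb C^{\mathbb Z}$ bounded with $q_2(\gamma)<\infty$. Then $D_\gamma\in C^2(A_a)$.
   Context: On $\ell^2(\mathbb Z)$: $Te_k=e_{k+1}$, $Xe_k=ke_k$, $D_\gamma e_k=\gamma_ke_k$. $(S\gamma)_k=\gamma_{k+1}$, $(\Delta\gamma)_k=\gamma_k-\gamma_{k+1}$; $q_0(\gamma)=\sup|\gamma_k|$, $q_{n+1}(\gamma)=q_n(\gamma)+\sup_k|k^{n+1}(\Delta^{n+1}\gamma)_k|$. $A_a$ is the self-adjoint closure on $\mathcal D(X)$ of $\frac12\sum_{m\ne0}a^{-|m|}(T^mX+XT^m)$. $B\in C^1(A)$ if $|\langle A\varphi,B\psi\rangle-\langle\varphi,BA\psi\rangle|\le C\|\varphi\|\|\psi\|$ on $\mathcal D(A)$, with $\mathrm{ad}_AB$ the associated bounded operator; $B\in C^2(A)$ if $B\in C^1(A)$ and $\mathrm{ad}_AB\in C^1(A)$. *)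

(* Defs.v *)
From Stdlib Require Import Reals ZArith Classical ClassicalEpsilon.
Open Scope R_scope.

Record Cx := mkC { Cre : R; Cim : R }.
Definition C0 : Cx := mkC 0 0.
Definition Cadd (z w : Cx) : Cx := mkC (Cre z + Cre w) (Cim z + Cim w).
Definition Csub (z w : Cx) : Cx := mkC (Cre z - Cre w) (Cim z - Cim w).
Definition Cmul (z w : Cx) : Cx :=
  mkC (Cre z * Cre w - Cim z * Cim w) (Cre z * Cim w + Cim z * Cre w).
Definition Cconj (z : Cx) : Cx := mkC (Cre z) (- Cim z).
Definition Cscal (r : R) (z : Cx) : Cx := mkC (r * Cre z) (r * Cim z).
Definition Cnorm2 (z : Cx) : R := Cre z * Cre z + Cim z * Cim z.
Definition Cabs (z : Cx) : R := sqrt (Cnorm2 z).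

Definition ZSumTo (f : Z -> R) (l : R) : Prop :=
  exists l1 l2,
    infinite_sum (fun n => f (Z.of_nat n)) l1 /\
    infinite_sum (fun n => f (- Z.of_nat (S n))%Z) l2 /\ l = l1 + l2.

(* total version (value 0 if the sum does not exist; only used on convergent sums) *)
Definition Zsum (f : Z -> R) : R :=
  match excluded_middle_informative (exists l, ZSumTo f l) with
  | left H => proj1_sig (constructive_indefinite_description _ H)
  | right _ => 0
  end.

Definition ZsumC (f : Z -> Cx) : Cx :=
  mkC (Zsum (fun k => Cre (f k))) (Zsum (fun k => Cim (f k))).

Definition seqZ := Z -> Cx.
Definition in_l2 (phi : seqZ) : Prop := exists l, ZSumTo (fun k => Cnorm2 (phi k)) l.
Definition l2norm (phi : seqZ) : R := sqrt (Zsum (fun k => Cnorm2 (phi k))).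
Definition inner (phi psi : seqZ) : Cx := ZsumC (fun k => Cmul (Cconj (phi k)) (psi k)).
Definition vadd (phi psi : seqZ) : seqZ := fun k => Cadd (phi k) (psi k).
Definition vsub (phi psi : seqZ) : seqZ := fun k => Csub (phi k) (psi k).
Definition vscal (c : Cx) (phi : seqZ) : seqZ := fun k => Cmul c (phi k).

(* T e_k = e_{k+1}, i.e. (T phi)_k = phi_{k-1}; hence (T^m phi)_k = phi_{k-m}, m in Z *)
Definition Tpow (m : Z) (phi : seqZ) : seqZ := fun k => phi (k - m)%Z.
Definition Xop (phi : seqZ) : seqZ := fun k => Cscal (IZR k) (phi k).
Definition Dop (gamma : Z -> Cx) : seqZ -> seqZ := fun phi k => Cmul (gamma k) (phi k).

Definition domX (phi : seqZ) : Prop := in_l2 phi /\ in_l2 (Xop phi).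

(* A_a on D(X): 1/2 sum_{m<>0} a^{-|m|} (T^m X + X T^m), written componentwise *)
Definition A0 (a : R) (phi : seqZ) : seqZ := fun j =>
  ZsumC (fun m => if Z.eq_dec m 0 then C0 else
           Cscal ((/ a) ^ (Z.abs_nat m) / 2)
                 (Cadd (Tpow m (Xop phi) j) (Xop (Tpow m phi) j))).

(* Graph of the closure A_a of A0 (restricted to D(X)):
   Agraph a phi chi  <->  phi in D(A_a) and A_a phi = chi *)
Definition Agraph (a : R) (phi chi : seqZ) : Prop :=
  in_l2 phi /\ in_l2 chi /\
  exists u : nat -> seqZ,
    (forall n, domX (u n)) /\
    Un_cv (fun n => l2norm (vsub (u n) phi)) 0 /\
    Un_cv (fun n => l2norm (vsub (A0 a (u n)) chi)) 0.

Definition bounded_op (B : seqZ -> seqZ) : Prop :=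
  (forall phi, in_l2 phi -> in_l2 (B phi)) /\
  (forall phi psi c, in_l2 phi -> in_l2 psi ->
      forall k, B (vadd phi (vscal c psi)) k = Cadd (B phi k) (Cmul c (B psi k))) /\
  (exists M, forall phi, in_l2 phi -> l2norm (B phi) <= M * l2norm phi).

Definition C1 (a : R) (B : seqZ -> seqZ) : Prop :=
  bounded_op B /\
  exists C, forall phi chi psi omega,
    Agraph a phi chi -> Agraph a psi omega ->
    Cabs (Csub (inner chi (B psi)) (inner phi (B omega)))
      <= C * l2norm phi * l2norm psi.

(* L is the bounded operator ad_A B associated with the form *)
Definition is_adA (a : R) (B L : seqZ -> seqZ) : Prop :=
  bounded_op L /\
  forall phi chi psi omega,
    Agraph a phi chi -> Agraph a psi omega ->
    inner phi (L psi) = Csub (inner chi (B psi)) (inner phi (B omega)).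

Definition C2 (a : R) (B : seqZ -> seqZ) : Prop :=
  C1 a B /\ exists L, is_adA a B L /\ C1 a L.

(** * Seminorms q_n: q_n(gamma) < oo iff sup_k |k^j (Delta^j gamma)_k| < oo for j <= n *)
Definition Delta (gamma : Z -> Cx) : Z -> Cx := fun k => Csub (gamma k) (gamma (k + 1)%Z).
Definition q_finite (n : nat) (gamma : Z -> Cx) : Prop :=
  forall j, (j <= n)%nat ->
    exists M, forall k, Cabs (Cscal (IZR k ^ j) (Nat.iter j Delta gamma k)) <= M.

(* Main.v *)
Require Import Defs.
From Stdlib Require Import Reals ZArith Lra Lia Psatz Classical ClassicalEpsilon FunctionalExtensionality.
Open Scope R_scope.

Lemma cv_const : forall c, Un_cv (fun _ => c) c.
Proof. intros c eps He; exists 0%nat; intros; unfold Rdist; rewrite Rminus_diag, Rabs_R0; lra. Qed.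

Lemma lim_le_ev : forall (u v : nat -> R) l1 l2 N0,
  (forall n, (n >= N0)%nat -> u n <= v n) -> Un_cv u l1 -> Un_cv v l2 -> l1 <= l2.
Proof.
  intros u v l1 l2 N0 H H1 H2.
  destruct (Rle_dec l1 l2) as [|Hn]; auto. exfalso.
  set (e := (l1 - l2)/2).
  assert (He : e > 0) by (unfold e; lra).
  destruct (H1 e He) as [N1 HN1]. destruct (H2 e He) as [N2 HN2].
  set (n := (N0 + N1 + N2)%nat).
  specialize (HN1 n ltac:(lia)). specialize (HN2 n ltac:(lia)). specialize (H n ltac:(lia)).
  unfold Rdist in *. apply Rabs_def2 in HN1. apply Rabs_def2 in HN2. unfold e in *. lra.
Qed.

Lemma lim_le_const : forall (u : nat -> R) l B, (forall n, u n <= B) -> Un_cv u l -> l <= B.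
Proof. intros. apply (lim_le_ev u (fun _ => B) l B 0); auto using cv_const. Qed.

Lemma lim_ge_const : forall (u : nat -> R) l B, (forall n, B <= u n) -> Un_cv u l -> B <= l.
Proof. intros. apply (lim_le_ev (fun _ => B) u B l 0); auto using cv_const. Qed.

Lemma cv_squeeze0 : forall (u v : nat -> R), (forall n, 0 <= u n <= v n) -> Un_cv v 0 -> Un_cv u 0.
Proof.
  intros u v H Hv eps He. destruct (Hv eps He) as [N HN]. exists N. intros n Hn.
  specialize (HN n Hn). specialize (H n). unfold Rdist in *. rewrite Rminus_0_r in *.
  rewrite Rabs_right in * by lra. lra.
Qed.

Lemma cv_unique : forall u l1 l2, Un_cv u l1 -> Un_cv u l2 -> l1 = l2.
Proof. intros; eapply UL_sequence; eauto. Qed.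

Lemma cv_ext : forall u v l, (forall n, u n = v n) -> Un_cv u l -> Un_cv v l.
Proof. intros u v l H Hu eps He. destruct (Hu eps He) as [N HN]; exists N; intros; rewrite <- H; auto. Qed.

Lemma cv_scal : forall u l c, Un_cv u l -> Un_cv (fun n => c * u n) (c * l).
Proof. intros. apply CV_mult; auto using cv_const. Qed.

Lemma cv_shift : forall u l k, Un_cv u l -> Un_cv (fun n => u (n + k)%nat) l.
Proof. intros u l k H eps He. destruct (H eps He) as [N HN]; exists N; intros; apply HN; lia. Qed.

Lemma cv_le_0 : forall u, Un_cv u 0 -> forall c, Un_cv (fun n => c * u n) 0.
Proof. intros. replace 0 with (c * 0) by ring. apply cv_scal; auto. Qed.

Lemma sum_nonneg : forall f N, (forall n, 0 <= f n) -> 0 <= sum_f_R0 f N.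
Proof. intros; apply cond_pos_sum; auto. Qed.

Lemma sum_term_le : forall f N n, (forall n, 0 <= f n) -> (n <= N)%nat -> f n <= sum_f_R0 f N.
Proof.
  intros f N n Hf Hn. induction N.
  - assert (n = 0%nat) by lia; subst; simpl; lra.
  - destruct (Nat.eq_dec n (S N)) as [->|Hne]. simpl. pose proof (sum_nonneg f N Hf); lra.
    simpl. specialize (Hf (S N)). assert (n <= N)%nat by lia. pose proof (IHN H). lra.
Qed.

Lemma sum_mono_N : forall f N M, (forall n, 0 <= f n) -> (N <= M)%nat -> sum_f_R0 f N <= sum_f_R0 f M.
Proof.
  intros f N M Hf H. induction H. lra. simpl. specialize (Hf (S m)). lra.
Qed.

Lemma sum_le : forall f g N, (forall n, f n <= g n) -> sum_f_R0 f N <= sum_f_R0 g N.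
Proof. intros; apply sum_Rle; auto. Qed.

Lemma sum_ext : forall f g N, (forall n, f n = g n) -> sum_f_R0 f N = sum_f_R0 g N.
Proof. intros. induction N; simpl; rewrite H; try rewrite IHN; auto. Qed.

Lemma sum_scal : forall f c N, sum_f_R0 (fun n => c * f n) N = c * sum_f_R0 f N.
Proof. intros. induction N; simpl; try rewrite IHN; ring. Qed.

Lemma sum_opp : forall f N, sum_f_R0 (fun n => - f n) N = - sum_f_R0 f N.
Proof. intros. induction N; simpl; try rewrite IHN; ring. Qed.

Lemma sum_exchange : forall (F : nat -> nat -> R) N M,
  sum_f_R0 (fun i => sum_f_R0 (fun j => F i j) M) N = sum_f_R0 (fun j => sum_f_R0 (fun i => F i j) N) M.
Proof.
  intros F N M. induction N; simpl.
  - apply sum_ext; intros; reflexivity.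
  - rewrite IHN, <- sum_plus. apply sum_ext; intros; reflexivity.
Qed.

Lemma sum_cv : forall (u : nat -> nat -> R) (l : nat -> R) N,
  (forall i, Un_cv (u i) (l i)) -> Un_cv (fun M => sum_f_R0 (fun i => u i M) N) (sum_f_R0 l N).
Proof.
  intros u l N H. induction N; simpl. apply H. apply CV_plus; auto.
Qed.

Lemma Rabs_le_inv : forall a b, Rabs a <= b -> - b <= a <= b.
Proof. intros a b H. unfold Rabs in H; destruct (Rcase_abs a); lra. Qed.

Definition hp (h : Z -> R) (n : nat) : R := h (Z.of_nat n) + h (- Z.of_nat (S n))%Z.
Definition SB (h : Z -> R) (N : nat) : R := sum_f_R0 (hp h) N.
Definition AS (h : Z -> R) : Prop := exists B, forall N, SB (fun k => Rabs (h k)) N <= B.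

Lemma SB_split : forall h N, SB h N =
  sum_f_R0 (fun n => h (Z.of_nat n)) N + sum_f_R0 (fun n => h (- Z.of_nat (S n))%Z) N.
Proof. intros; unfold SB, hp; apply sum_plus. Qed.

Lemma SB_S : forall h N, SB h (S N) = SB h N + hp h (S N).
Proof. reflexivity. Qed.

Lemma SB_ext : forall h g N, (forall k, h k = g k) -> SB h N = SB g N.
Proof. intros; unfold SB, hp; apply sum_ext; intros; rewrite !H; auto. Qed.

Lemma SB_plus : forall h g N, SB (fun k => h k + g k) N = SB h N + SB g N.
Proof. intros; unfold SB. rewrite <- sum_plus. apply sum_ext; intros; unfold hp; ring. Qed.

Lemma SB_scal : forall h c N, SB (fun k => c * h k) N = c * SB h N.
Proof. intros; unfold SB. rewrite <- sum_scal. apply sum_ext; intros; unfold hp; ring. Qed.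

Lemma SB_opp : forall h N, SB (fun k => - h k) N = - SB h N.
Proof. intros; unfold SB. rewrite <- sum_opp. apply sum_ext; intros; unfold hp; ring. Qed.

Lemma SB_minus : forall h g N, SB (fun k => h k - g k) N = SB h N - SB g N.
Proof. intros. unfold Rminus. rewrite SB_plus, SB_opp; auto. Qed.

Lemma SB_le : forall h g N, (forall k, h k <= g k) -> SB h N <= SB g N.
Proof. intros; unfold SB, hp; apply sum_le; intros; pose proof (H (Z.of_nat n)); pose proof (H (- Z.of_nat (S n))%Z); lra. Qed.

Lemma SB_nonneg : forall h N, (forall k, 0 <= h k) -> 0 <= SB h N.
Proof. intros; unfold SB, hp; apply sum_nonneg; intros; pose proof (H (Z.of_nat n)); pose proof (H (- Z.of_nat (S n))%Z); lra. Qed.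

Lemma SB_mono : forall h N M, (forall k, 0 <= h k) -> (N <= M)%nat -> SB h N <= SB h M.
Proof. intros; unfold SB; apply sum_mono_N; auto; intros; unfold hp;
  pose proof (H (Z.of_nat n)); pose proof (H (- Z.of_nat (S n))%Z); lra. Qed.

Lemma SB_abs : forall h N, Rabs (SB h N) <= SB (fun k => Rabs (h k)) N.
Proof.
  intros. unfold SB. eapply Rle_trans. apply Rsum_abs. apply sum_le. intros; unfold hp. apply Rabs_triang.
Qed.

Lemma SB_term : forall h k, (forall k, 0 <= h k) -> h k <= SB h (Z.abs_nat k).
Proof.
  intros h k H. destruct (Z_le_gt_dec 0 k).
  - unfold SB. eapply Rle_trans. 2: apply (sum_term_le _ _ (Z.abs_nat k)).
    unfold hp. rewrite Nat2Z.inj_abs_nat, Z.abs_eq by lia. pose proof (H (- Z.of_nat (S (Z.abs_nat k)))%Z); lra.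
    intros; unfold hp; pose proof (H (Z.of_nat n)); pose proof (H (- Z.of_nat (S n))%Z); lra. lia.
  - unfold SB. eapply Rle_trans. 2: apply (sum_term_le _ _ (pred (Z.abs_nat k))).
    unfold hp. replace (- Z.of_nat (S (pred (Z.abs_nat k))))%Z with k by lia.
    pose proof (H (Z.of_nat (pred (Z.abs_nat k)))); lra.
    intros; unfold hp; pose proof (H (Z.of_nat n)); pose proof (H (- Z.of_nat (S n))%Z); lra. lia.
Qed.

Lemma SB_diff : forall h N k, Rabs (SB h (N + k) - SB h N) <= SB (fun z => Rabs (h z)) (N + k) - SB (fun z => Rabs (h z)) N.
Proof.
  intros h N k. induction k.
  - rewrite Nat.add_0_r. unfold Rminus; rewrite !Rplus_opp_r, Rabs_R0; lra.
  - rewrite Nat.add_succ_r, !SB_S.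
    replace (SB h (N + k) + hp h (S (N + k)) - SB h N) with ((SB h (N + k) - SB h N) + hp h (S (N+k))) by ring.
    eapply Rle_trans. apply Rabs_triang. unfold hp at 1 2.
    pose proof (Rabs_triang (h (Z.of_nat (S (N + k)))) (h (- Z.of_nat (S (S (N + k))))%Z)). lra.
Qed.

Lemma ZSumTo_unique : forall h l1 l2, ZSumTo h l1 -> ZSumTo h l2 -> l1 = l2.
Proof.
  intros h l1 l2 [a1 [b1 [Ha1 [Hb1 ->]]]] [a2 [b2 [Ha2 [Hb2 ->]]]].
  rewrite (uniqueness_sum _ _ _ Ha1 Ha2), (uniqueness_sum _ _ _ Hb1 Hb2). auto.
Qed.

Lemma Zsum_eq : forall h l, ZSumTo h l -> Zsum h = l.
Proof.
  intros h l H. unfold Zsum. destruct (excluded_middle_informative _) as [H1|H1].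
  - destruct (constructive_indefinite_description _ H1) as [l' Hl']; simpl. eapply ZSumTo_unique; eauto.
  - exfalso; apply H1; eauto.
Qed.

Lemma series_abs_cv : forall f B, (forall N, sum_f_R0 (fun n => Rabs (f n)) N <= B) ->
  { l | Un_cv (sum_f_R0 f) l }.
Proof.
  intros f B H. apply cv_cauchy_2. apply cauchy_abs. apply cv_cauchy_1.
  apply growing_cv. intro n; simpl. pose proof (Rabs_pos (f (S n))); lra.
  exists B. intros x [i ->]. apply H.
Qed.

Lemma AS_cv : forall h, AS h -> ZSumTo h (Zsum h) /\ Un_cv (SB h) (Zsum h).
Proof.
  intros h [B HB].
  assert (H1 : forall N, sum_f_R0 (fun n => Rabs (h (Z.of_nat n))) N <= B).
  { intros N. eapply Rle_trans; [|apply (HB N)]. rewrite SB_split.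
    pose proof (sum_nonneg (fun n => Rabs (h (- Z.of_nat (S n))%Z)) N (fun n => Rabs_pos _)). lra. }
  assert (H2 : forall N, sum_f_R0 (fun n => Rabs (h (- Z.of_nat (S n))%Z)) N <= B).
  { intros N. eapply Rle_trans; [|apply (HB N)]. rewrite SB_split.
    pose proof (sum_nonneg (fun n => Rabs (h (Z.of_nat n))) N (fun n => Rabs_pos _)). lra. }
  destruct (series_abs_cv _ _ H1) as [l1 Hl1].
  destruct (series_abs_cv _ _ H2) as [l2 Hl2].
  assert (HZ : ZSumTo h (l1 + l2)) by (exists l1, l2; repeat split; auto).
  rewrite (Zsum_eq _ _ HZ). split; auto.
  eapply cv_ext. intros; symmetry; apply SB_split. apply CV_plus; auto.
Qed.

Lemma Zsum_cv : forall h, AS h -> Un_cv (SB h) (Zsum h).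
Proof. intros; apply AS_cv; auto. Qed.

Lemma Zsum_ZSumTo : forall h, AS h -> ZSumTo h (Zsum h).
Proof. intros; apply AS_cv; auto. Qed.

Lemma AS_dom : forall h g, (forall k, Rabs (h k) <= g k) -> AS g -> AS h.
Proof.
  intros h g H [B HB]. exists B. intros N. eapply Rle_trans; [|apply (HB N)].
  eapply Rle_trans. apply SB_le. apply H. apply SB_le. intros; apply Rle_abs.
Qed.

Lemma AS_abs : forall h, AS h -> AS (fun k => Rabs (h k)).
Proof. intros h [B HB]; exists B; intros N; eapply Rle_trans; [|apply (HB N)]; apply SB_le; intros; rewrite Rabs_Rabsolu; lra. Qed.

Lemma AS_plus : forall h g, AS h -> AS g -> AS (fun k => h k + g k).
Proof.
  intros h g [B1 H1] [B2 H2]. exists (B1 + B2). intros N.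
  eapply Rle_trans. apply SB_le. intros; apply Rabs_triang. rewrite SB_plus. specialize (H1 N); specialize (H2 N); lra.
Qed.

Lemma AS_scal : forall h c, AS h -> AS (fun k => c * h k).
Proof.
  intros h c [B H]. exists (Rabs c * B). intros N.
  eapply Rle_trans. apply SB_le. intros; rewrite Rabs_mult; apply Rle_refl. rewrite SB_scal.
  apply Rmult_le_compat_l. apply Rabs_pos. auto.
Qed.

Lemma AS_opp : forall h, AS h -> AS (fun k => - h k).
Proof. intros. eapply AS_dom; [|apply (AS_abs h H)]. intros; rewrite Rabs_Ropp; lra. Qed.

Lemma AS_minus : forall h g, AS h -> AS g -> AS (fun k => h k - g k).
Proof. intros. apply AS_plus; auto. apply AS_opp; auto. Qed.

Lemma AS_ext : forall h g, (forall k, h k = g k) -> AS h -> AS g.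
Proof. intros. eapply AS_dom; [|apply (AS_abs _ H0)]. intros; rewrite <- H; lra. Qed.

Lemma AS_nonneg_bound : forall h B, (forall k, 0 <= h k) -> (forall N, SB h N <= B) -> AS h.
Proof. intros h B H0 H. exists B. intros N. erewrite SB_ext. apply H. intros; rewrite Rabs_right; auto; apply Rle_ge; auto. Qed.

Lemma Zsum_ext : forall h g, (forall k, h k = g k) -> Zsum h = Zsum g.
Proof. intros. f_equal. apply functional_extensionality; auto. Qed.

Lemma Zsum_plus : forall h g, AS h -> AS g -> Zsum (fun k => h k + g k) = Zsum h + Zsum g.
Proof.
  intros. eapply cv_unique. apply Zsum_cv, AS_plus; auto.
  eapply cv_ext. intros; symmetry; apply SB_plus. apply CV_plus; apply Zsum_cv; auto.
Qed.

Lemma Zsum_scal : forall h c, AS h -> Zsum (fun k => c * h k) = c * Zsum h.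
Proof.
  intros. eapply cv_unique. apply Zsum_cv, AS_scal; auto.
  eapply cv_ext. intros; symmetry; apply SB_scal. apply cv_scal; apply Zsum_cv; auto.
Qed.

Lemma Zsum_opp : forall h, AS h -> Zsum (fun k => - h k) = - Zsum h.
Proof.
  intros. replace (- Zsum h) with ((-1) * Zsum h) by ring. rewrite <- Zsum_scal; auto.
  apply Zsum_ext; intros; ring.
Qed.

Lemma Zsum_minus : forall h g, AS h -> AS g -> Zsum (fun k => h k - g k) = Zsum h - Zsum g.
Proof. intros. unfold Rminus. rewrite Zsum_plus, Zsum_opp; auto. apply AS_opp; auto. Qed.

Lemma Zsum_le : forall h g, AS h -> AS g -> (forall k, h k <= g k) -> Zsum h <= Zsum g.
Proof. intros. eapply (lim_le_ev (SB h) (SB g) _ _ 0). intros; apply SB_le; auto. apply Zsum_cv; auto. apply Zsum_cv; auto. Qed.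

Lemma Zsum_nonneg : forall h, (forall k, 0 <= h k) -> 0 <= Zsum h.
Proof.
  intros h H. unfold Zsum. destruct (excluded_middle_informative _) as [H1|H1]; [|lra].
  destruct (constructive_indefinite_description _ H1) as [l [a [b [Ha [Hb ->]]]]]; simpl.
  assert (0 <= a). { eapply (lim_ge_const _ _ 0 _ Ha). Unshelve. intros; apply sum_nonneg; intros; apply H. }
  assert (0 <= b). { eapply (lim_ge_const _ _ 0 _ Hb). Unshelve. intros; apply sum_nonneg; intros; apply H. }
  lra.
Qed.

Lemma Zsum_abs : forall h, AS h -> Rabs (Zsum h) <= Zsum (fun k => Rabs (h k)).
Proof.
  intros. apply Rabs_le. split.
  - rewrite <- Zsum_opp by (apply AS_abs; auto). apply Zsum_le; auto. apply AS_opp, AS_abs; auto.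
    intros. pose proof (Rabs_le_inv (h k) (Rabs (h k)) (Rle_refl _)). lra.
  - apply Zsum_le; auto. apply AS_abs; auto. intros; apply Rle_abs.
Qed.

Lemma Zsum_bound : forall h B, AS h -> (forall N, SB h N <= B) -> Zsum h <= B.
Proof. intros. eapply lim_le_const; eauto. apply Zsum_cv; auto. Qed.

Lemma SB_le_Zsum : forall h N, AS h -> (forall k, 0 <= h k) -> SB h N <= Zsum h.
Proof. intros. apply growing_ineq. intro n. rewrite SB_S. unfold hp. pose proof (H0 (Z.of_nat (S n))); pose proof (H0 (- Z.of_nat (S (S n)))%Z); lra. apply Zsum_cv; auto. Qed.

Lemma term_le_Zsum : forall h k, AS h -> (forall k, 0 <= h k) -> h k <= Zsum h.
Proof. intros. eapply Rle_trans. apply SB_term; auto. apply SB_le_Zsum; auto. Qed.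

Lemma Zsum_tail : forall h N, AS h -> Rabs (Zsum h - SB h N) <= Zsum (fun k => Rabs (h k)) - SB (fun k => Rabs (h k)) N.
Proof.
  intros h N H.
  assert (C1 := Zsum_cv h H). assert (C2 := Zsum_cv _ (AS_abs h H)).
  apply Rabs_le. split.
  - apply (lim_le_ev (fun n => - (SB (fun k => Rabs (h k)) (n + N) - SB (fun k => Rabs (h k)) N)) (fun n => SB h (n + N) - SB h N) _ _ 0).
    intros n _. rewrite (Nat.add_comm n N). pose proof (SB_diff h N n). apply Rabs_le_inv in H0. lra.
    apply CV_opp. apply CV_minus. apply cv_shift; auto. apply cv_const.
    apply CV_minus. apply cv_shift; auto. apply cv_const.
  - apply (lim_le_ev (fun n => SB h (n + N) - SB h N) (fun n => SB (fun k => Rabs (h k)) (n + N) - SB (fun k => Rabs (h k)) N) _ _ 0).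
    intros n _. rewrite (Nat.add_comm n N). pose proof (SB_diff h N n). apply Rabs_le_inv in H0. lra.
    apply CV_minus. apply cv_shift; auto. apply cv_const.
    apply CV_minus. apply cv_shift; auto. apply cv_const.
Qed.

Lemma SB_shift1 : forall h N, SB (fun k => h (k + 1)%Z) N = SB h N - h (- Z.of_nat (S N))%Z + h (Z.of_nat (S N)).
Proof.
  intros h N. induction N.
  - unfold SB, hp; simpl. replace (0+1)%Z with 1%Z by lia. replace (-1 + 1)%Z with 0%Z by lia.
    replace (Z.pos (Pos.of_succ_nat 0)) with 1%Z by lia. ring.
  - rewrite !SB_S, IHN. unfold hp.
    replace (Z.of_nat (S N) + 1)%Z with (Z.of_nat (S (S N))) by lia.
    replace (- Z.of_nat (S (S N)) + 1)%Z with (- Z.of_nat (S N))%Z by lia. ring.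
Qed.

Lemma SB_refl : forall h N, SB (fun k => h (- k)%Z) N = SB (fun k => h (k + 1)%Z) N.
Proof.
  intros. unfold SB, hp. apply sum_ext; intros n.
  replace (- - Z.of_nat (S n))%Z with (Z.of_nat n + 1)%Z by lia.
  replace (- Z.of_nat (S n) + 1)%Z with (- Z.of_nat n)%Z by lia. ring.
Qed.

Lemma cv_unshift : forall u l, Un_cv (fun n => u (S n)) l -> Un_cv u l.
Proof. intros u l H eps He. destruct (H eps He) as [N HN]. exists (S N). intros n Hn.
  destruct n. lia. apply HN; lia. Qed.

Lemma hp_abs_cv0 : forall h, AS h -> Un_cv (hp (fun k => Rabs (h k))) 0.
Proof.
  intros h H. apply cv_unshift.
  assert (C := Zsum_cv _ (AS_abs h H)).
  eapply cv_ext. intros n. symmetry. instantiate (1 := fun n => SB (fun k => Rabs (h k)) (S n) - SB (fun k => Rabs (h k)) n).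
  simpl. rewrite SB_S. ring.
  replace 0 with (Zsum (fun k => Rabs (h k)) - Zsum (fun k => Rabs (h k))) by ring.
  apply CV_minus; auto. eapply cv_ext; [|apply (cv_shift _ _ 1 C)].
  intros; simpl; f_equal; lia. 
Qed.

Lemma ends_cv0 : forall h, AS h -> Un_cv (fun N => h (Z.of_nat (S N))) 0 /\ Un_cv (fun N => h (- Z.of_nat (S N))%Z) 0.
Proof.
  intros h H. assert (C := hp_abs_cv0 h H).
  split.
  - assert (C' : Un_cv (fun N => hp (fun k => Rabs (h k)) (S N)) 0).
    { eapply cv_ext; [|apply (cv_shift _ _ 1 C)]. intros; simpl; rewrite Nat.add_1_r; reflexivity. }
    intros eps He. destruct (C' eps He) as [N HN]. exists N; intros n Hn. specialize (HN n Hn).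
    unfold Rdist, hp in *. rewrite Rminus_0_r in *. pose proof (Rabs_pos (h (- Z.of_nat (S (S n)))%Z)).
    rewrite (Rabs_right (_ + _)) in HN by (pose proof (Rabs_pos (h (Z.of_nat (S n)))); lra). lra.
  - intros eps He. destruct (C eps He) as [N HN]. exists N; intros n Hn. specialize (HN n Hn).
    unfold Rdist, hp in *. rewrite Rminus_0_r in *. pose proof (Rabs_pos (h (Z.of_nat n))).
    rewrite (Rabs_right (_ + _)) in HN by (pose proof (Rabs_pos (h (- Z.of_nat (S n))%Z)); lra). lra.
Qed.

Lemma shift1 : forall h, AS h -> AS (fun k => h (k + 1)%Z) /\ Zsum (fun k => h (k + 1)%Z) = Zsum h.
Proof.
  intros h H. assert (HA : AS (fun k => h (k + 1)%Z)).
  { destruct H as [B HB]. exists B. intros N. rewrite (SB_shift1 (fun k => Rabs (h k))).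
    eapply Rle_trans; [|apply (HB (S N))]. rewrite SB_S. unfold hp.
    pose proof (Rabs_pos (h (- Z.of_nat (S N))%Z)). pose proof (Rabs_pos (h (- Z.of_nat (S (S N)))%Z)). lra. }
  split; auto. eapply cv_unique. apply Zsum_cv; auto.
  eapply cv_ext. intros; symmetry; apply SB_shift1.
  destruct (ends_cv0 h H) as [E1 E2].
  replace (Zsum h) with (Zsum h - 0 + 0) by ring. apply CV_plus; auto. apply CV_minus; auto. apply Zsum_cv; auto.
Qed.

Lemma refl : forall h, AS h -> AS (fun k => h (- k)%Z) /\ Zsum (fun k => h (- k)%Z) = Zsum h.
Proof.
  intros h H. destruct (shift1 h H) as [HA HZ].
  assert (HA' : AS (fun k => h (- k)%Z)).
  { destruct HA as [B HB]; exists B; intros N. rewrite (SB_refl (fun k => Rabs (h k))). apply (HB N). }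
  split; auto. rewrite <- HZ. eapply cv_unique. apply Zsum_cv; auto.
  eapply cv_ext. intros; symmetry; apply SB_refl. apply Zsum_cv; auto.
Qed.

Lemma shiftm1 : forall h, AS h -> AS (fun k => h (k - 1)%Z) /\ Zsum (fun k => h (k - 1)%Z) = Zsum h.
Proof.
  intros h H. destruct (refl h H) as [H1 E1].
  destruct (shift1 _ H1) as [H2 E2]. destruct (refl _ H2) as [H3 E3].
  split.
  - eapply AS_ext; [|apply H3]. intros; simpl; f_equal; lia.
  - rewrite <- E1, <- E2, <- E3. apply Zsum_ext; intros; f_equal; lia.
Qed.

Lemma shift_nat : forall n h, AS h -> AS (fun k => h (k + Z.of_nat n)%Z) /\ Zsum (fun k => h (k + Z.of_nat n)%Z) = Zsum h.
Proof.
  induction n; intros h H.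
  - split. refine (AS_ext _ _ _ H); intros; f_equal; lia. apply Zsum_ext; intros; f_equal; lia.
  - destruct (IHn h H) as [H1 E1]. destruct (shift1 _ H1) as [H2 E2]. split.
    refine (AS_ext _ _ _ H2); intros; simpl; f_equal; lia.
    rewrite <- E1, <- E2. apply Zsum_ext; intros; f_equal; lia.
Qed.

Lemma shiftm_nat : forall n h, AS h -> AS (fun k => h (k - Z.of_nat n)%Z) /\ Zsum (fun k => h (k - Z.of_nat n)%Z) = Zsum h.
Proof.
  induction n; intros h H.
  - split. refine (AS_ext _ _ _ H); intros; f_equal; lia. apply Zsum_ext; intros; f_equal; lia.
  - destruct (IHn h H) as [H1 E1]. destruct (shiftm1 _ H1) as [H2 E2]. split.
    refine (AS_ext _ _ _ H2); intros; simpl; f_equal; lia.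
    rewrite <- E1, <- E2. apply Zsum_ext; intros; f_equal; lia.
Qed.

Lemma shift : forall c h, AS h -> AS (fun k => h (k + c)%Z) /\ Zsum (fun k => h (k + c)%Z) = Zsum h.
Proof.
  intros c h H. destruct (Z_le_gt_dec 0 c).
  - destruct (shift_nat (Z.to_nat c) h H) as [H1 E1]. rewrite Z2Nat.id in * by lia. auto.
  - destruct (shiftm_nat (Z.to_nat (- c)) h H) as [H1 E1]. rewrite Z2Nat.id in * by lia.
    split. refine (AS_ext _ _ _ H1); intros; f_equal; lia. rewrite <- E1; apply Zsum_ext; intros; f_equal; lia.
Qed.

Lemma reind : forall c h, AS h -> AS (fun k => h (c - k)%Z) /\ Zsum (fun k => h (c - k)%Z) = Zsum h.
Proof.
  intros c h H. destruct (shift c h H) as [H1 E1]. destruct (refl _ H1) as [H2 E2].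
  split. refine (AS_ext _ _ _ H2); intros; f_equal; lia. rewrite <- E1, <- E2; apply Zsum_ext; intros; f_equal; lia.
Qed.

Lemma AS_shift : forall c h, AS h -> AS (fun k => h (k + c)%Z).
Proof. intros; apply shift; auto. Qed.
Lemma Zsum_shift : forall c h, AS h -> Zsum (fun k => h (k + c)%Z) = Zsum h.
Proof. intros; apply shift; auto. Qed.
Lemma AS_reind : forall c h, AS h -> AS (fun k => h (c - k)%Z).
Proof. intros; apply reind; auto. Qed.
Lemma Zsum_reind : forall c h, AS h -> Zsum (fun k => h (c - k)%Z) = Zsum h.
Proof. intros; apply reind; auto. Qed.
Lemma AS_sub : forall c h, AS h -> AS (fun k => h (k - c)%Z).
Proof. intros. refine (AS_ext _ _ _ (AS_shift (-c) h H)); intros; f_equal; lia. Qed.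
Lemma Zsum_sub : forall c h, AS h -> Zsum (fun k => h (k - c)%Z) = Zsum h.
Proof. intros. rewrite <- (Zsum_shift (-c) h H). apply Zsum_ext; intros; f_equal; lia. Qed.

Lemma hp_sum : forall (g : Z -> nat -> R) M n,
  hp (fun j => sum_f_R0 (g j) M) n = sum_f_R0 (fun m => hp (fun j => g j m) n) M.
Proof. intros. unfold hp. rewrite <- sum_plus. reflexivity. Qed.

Lemma SB_exchange : forall (F : Z -> Z -> R) N,
  SB (fun j => SB (fun k => F j k) N) N = SB (fun k => SB (fun j => F j k) N) N.
Proof.
  intros F N. unfold SB at 1 3.
  rewrite (sum_ext _ (fun n => sum_f_R0 (fun m => hp (fun j => hp (F j) m) n) N)).
  2:{ intros n. unfold SB. apply hp_sum. }
  rewrite sum_exchange. apply sum_ext. intros m.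
  unfold SB. rewrite hp_sum. apply sum_ext. intros n. unfold hp. ring.
Qed.

Lemma SB_cv : forall (u : Z -> nat -> R) (l : Z -> R) N,
  (forall j, Un_cv (u j) (l j)) -> Un_cv (fun M => SB (fun j => u j M) N) (SB l N).
Proof.
  intros. unfold SB, hp. apply (sum_cv (fun n M => u (Z.of_nat n) M + u (- Z.of_nat (S n))%Z M)).
  intros; apply CV_plus; auto.
Qed.

Definition BoxB (F : Z -> Z -> R) (B : R) := forall N, SB (fun j => SB (fun k => Rabs (F j k)) N) N <= B.

Lemma BoxB_mono : forall F B N M, BoxB F B -> (N <= M)%nat -> SB (fun j => SB (fun k => Rabs (F j k)) N) N <= SB (fun j => SB (fun k => Rabs (F j k)) M) M.
Proof.
  intros. eapply Rle_trans. apply SB_le. intros j. apply (SB_mono (fun k => Rabs (F j k))). intros; apply Rabs_pos. apply H0.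
  apply SB_mono; auto. intros; apply SB_nonneg; intros; apply Rabs_pos.
Qed.

Lemma BoxB_row : forall F B j, BoxB F B -> AS (F j).
Proof.
  intros F B j H. exists B. intros N. set (M := Nat.max N (Z.abs_nat j)).
  eapply Rle_trans; [| apply (H M)].
  eapply Rle_trans. apply (SB_mono (fun k => Rabs (F j k)) N M). intros; apply Rabs_pos. lia.
  eapply Rle_trans. apply (SB_term (fun j => SB (fun k => Rabs (F j k)) M) j). intros; apply SB_nonneg; intros; apply Rabs_pos.
  apply SB_mono. intros; apply SB_nonneg; intros; apply Rabs_pos. lia.
Qed.

Lemma BoxB_trans : forall F B, BoxB F B -> BoxB (fun k j => F j k) B.
Proof. intros F B H N. rewrite <- SB_exchange. apply H. Qed.

Lemma BoxB_abs : forall F B, BoxB F B -> BoxB (fun j k => Rabs (F j k)) B.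
Proof. intros F B H N. erewrite SB_ext. apply (H N). intros; apply SB_ext; intros; rewrite Rabs_Rabsolu; auto. Qed.

Lemma BoxB_Pbound : forall F B N, BoxB F B -> SB (fun j => Zsum (fun k => Rabs (F j k))) N <= B.
Proof.
  intros F B N H.
  apply (lim_le_const (fun M => SB (fun j => SB (fun k => Rabs (F j k)) M) N)).
  - intros M. eapply Rle_trans. 2: apply (H (Nat.max N M)).
    eapply Rle_trans. apply SB_le. intros j. apply (SB_mono (fun k => Rabs (F j k)) M (Nat.max N M)). intros; apply Rabs_pos. lia.
    apply SB_mono. intros; apply SB_nonneg; intros; apply Rabs_pos. lia.
  - apply SB_cv. intros j. apply Zsum_cv. apply AS_abs. eapply BoxB_row; eauto.
Qed.

Lemma Fubini_col_AS : forall F B, BoxB F B -> AS (fun j => Zsum (F j)) /\ AS (fun j => Zsum (fun k => Rabs (F j k))).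
Proof.
  intros F B H.
  assert (HA : AS (fun j => Zsum (fun k => Rabs (F j k)))).
  { apply (AS_nonneg_bound _ B). intros; apply Zsum_nonneg; intros; apply Rabs_pos.
    intros; apply BoxB_Pbound; auto. }
  split; auto. eapply AS_dom; [|apply HA]. intros j. apply Zsum_abs. eapply BoxB_row; eauto.
Qed.

Lemma Fubini_Q : forall F B, BoxB F B ->
  Un_cv (fun N => SB (fun j => SB (fun k => F j k) N) N) (Zsum (fun j => Zsum (F j))).
Proof.
  intros F B H. destruct (Fubini_col_AS F B H) as [HG HGa].
  set (T := fun N => SB (fun j => SB (fun k => Rabs (F j k)) N) N).
  set (P := fun N => SB (fun j => Zsum (fun k => Rabs (F j k))) N).
  assert (HT : { l | Un_cv T l }).
  { apply growing_cv. intros n. apply (BoxB_mono F B); auto. exists B. intros x [i ->]. apply H. }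
  destruct HT as [Tinf HTinf].
  assert (HP : Un_cv P (Zsum (fun j => Zsum (fun k => Rabs (F j k))))) by (apply Zsum_cv; auto).
  assert (TP : forall N, T N <= P N).
  { intros N. apply SB_le. intros j. apply SB_le_Zsum. apply AS_abs; eapply BoxB_row; eauto. intros; apply Rabs_pos. }
  assert (PT : forall N, P N <= Tinf).
  { intros N. apply (lim_le_ev (fun M => SB (fun j => SB (fun k => Rabs (F j k)) M) N) T _ _ N).
    - intros M HM. unfold T. apply SB_mono. intros; apply SB_nonneg; intros; apply Rabs_pos. lia.
    - apply SB_cv. intros j. apply Zsum_cv. apply AS_abs. eapply BoxB_row; eauto.
    - auto. }
  assert (E : Tinf = Zsum (fun j => Zsum (fun k => Rabs (F j k)))).
  { apply Rle_antisym. apply (lim_le_ev T P _ _ 0); auto. apply (lim_le_ev P (fun _ => Tinf) _ _ 0); auto using cv_const. }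
  assert (D : Un_cv (fun N => P N - T N) 0).
  { replace 0 with (Zsum (fun j => Zsum (fun k => Rabs (F j k))) - Tinf) by (rewrite E; ring). apply CV_minus; auto. }
  assert (D2 : Un_cv (fun N => Rabs (SB (fun j => Zsum (F j)) N - SB (fun j => SB (fun k => F j k) N) N)) 0).
  { eapply cv_squeeze0; [|apply D]. intros N. split. apply Rabs_pos.
    rewrite <- SB_minus. eapply Rle_trans. apply SB_abs. unfold P, T. rewrite <- SB_minus. apply SB_le.
    intros j. apply Zsum_tail. eapply BoxB_row; eauto. }
  assert (CG := Zsum_cv _ HG).
  intros eps He. destruct (D2 (eps/2) ltac:(lra)) as [N1 H1]. destruct (CG (eps/2) ltac:(lra)) as [N2 H2].
  exists (N1 + N2)%nat. intros n Hn. specialize (H1 n ltac:(lia)). specialize (H2 n ltac:(lia)).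
  unfold Rdist in *. rewrite Rminus_0_r, Rabs_Rabsolu in H1.
  replace (SB (fun j => SB (fun k => F j k) n) n - Zsum (fun j => Zsum (F j))) with
    (- (SB (fun j => Zsum (F j)) n - SB (fun j => SB (fun k => F j k) n) n) + (SB (fun j => Zsum (F j)) n - Zsum (fun j => Zsum (F j)))) by ring.
  eapply Rle_lt_trans. apply Rabs_triang. rewrite Rabs_Ropp. lra.
Qed.

Theorem Fubini : forall F B, BoxB F B ->
  Zsum (fun j => Zsum (fun k => F j k)) = Zsum (fun k => Zsum (fun j => F j k)).
Proof.
  intros F B H. pose proof (Fubini_Q F B H) as Q1. pose proof (Fubini_Q _ B (BoxB_trans F B H)) as Q2.
  eapply cv_unique. 2: apply Q2. eapply cv_ext; [|apply Q1]. intros N. simpl. apply SB_exchange.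
Qed.

Lemma Cx_eq : forall z w, Cre z = Cre w -> Cim z = Cim w -> z = w.
Proof. intros [a b] [c d]; simpl; intros; subst; auto. Qed.

Lemma Cnorm2_nonneg : forall z, 0 <= Cnorm2 z.
Proof. intros; unfold Cnorm2; nra. Qed.

Lemma Cabs_nonneg : forall z, 0 <= Cabs z.
Proof. intros; unfold Cabs; apply sqrt_pos. Qed.

Lemma Cabs_sq : forall z, Cabs z * Cabs z = Cnorm2 z.
Proof. intros; unfold Cabs; apply sqrt_sqrt, Cnorm2_nonneg. Qed.

Lemma Cabs_le_sq : forall z r, 0 <= r -> Cnorm2 z <= r * r -> Cabs z <= r.
Proof.
  intros z r Hr H. unfold Cabs. rewrite <- (sqrt_square r) by auto. apply sqrt_le_1; auto. apply Cnorm2_nonneg. nra.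
Qed.

Lemma Cabs_le_iff : forall z w, Cnorm2 z <= Cnorm2 w -> Cabs z <= Cabs w.
Proof. intros. apply Cabs_le_sq. apply Cabs_nonneg. rewrite Cabs_sq; auto. Qed.

Lemma abs_le_sq : forall x c, 0 <= c -> x * x <= c * c -> Rabs x <= c.
Proof. intros. apply Rabs_le. split; nra. Qed.

Lemma Cre_le : forall z, Rabs (Cre z) <= Cabs z.
Proof.
  intros. apply abs_le_sq. apply Cabs_nonneg. rewrite Cabs_sq. unfold Cnorm2. nra.
Qed.

Lemma Cim_le : forall z, Rabs (Cim z) <= Cabs z.
Proof.
  intros. apply abs_le_sq. apply Cabs_nonneg. rewrite Cabs_sq. unfold Cnorm2. nra.
Qed.

Lemma sq_abs : forall x, x * x = Rabs x * Rabs x.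
Proof. intros. rewrite <- Rabs_mult. rewrite Rabs_right; nra. Qed.

Lemma Cabs_le_sum : forall z, Cabs z <= Rabs (Cre z) + Rabs (Cim z).
Proof.
  intros. apply Cabs_le_sq. pose proof (Rabs_pos (Cre z)); pose proof (Rabs_pos (Cim z)); lra.
  unfold Cnorm2. rewrite (sq_abs (Cre z)), (sq_abs (Cim z)).
  pose proof (Rabs_pos (Cre z)); pose proof (Rabs_pos (Cim z)). nra.
Qed.

Lemma Cnorm2_mul : forall z w, Cnorm2 (Cmul z w) = Cnorm2 z * Cnorm2 w.
Proof. intros; unfold Cnorm2, Cmul; simpl; ring. Qed.

Lemma Cabs_mul : forall z w, Cabs (Cmul z w) = Cabs z * Cabs w.
Proof. intros; unfold Cabs. rewrite Cnorm2_mul, sqrt_mult; auto using Cnorm2_nonneg. Qed.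

Lemma Cabs_conj : forall z, Cabs (Cconj z) = Cabs z.
Proof. intros; unfold Cabs, Cnorm2, Cconj; simpl; f_equal; ring. Qed.

Lemma Cabs_scal : forall r z, Cabs (Cscal r z) = Rabs r * Cabs z.
Proof.
  intros; unfold Cabs. rewrite <- sqrt_Rsqr_abs, <- sqrt_mult. f_equal. unfold Cnorm2, Cscal, Rsqr; simpl; ring.
  apply Rle_0_sqr. apply Cnorm2_nonneg.
Qed.

Lemma Cabs_C0 : Cabs C0 = 0.
Proof. unfold Cabs, Cnorm2, C0; simpl. replace (0*0+0*0) with 0 by ring. apply sqrt_0. Qed.

Lemma CS2 : forall x y z w, Rabs (x * z + y * w) <= sqrt (x*x + y*y) * sqrt (z*z + w*w).
Proof.
  intros. rewrite <- sqrt_mult by nra. rewrite <- sqrt_Rsqr_abs. apply sqrt_le_1. apply Rle_0_sqr. nra.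
  unfold Rsqr. pose proof (Rle_0_sqr (x*w - y*z)). unfold Rsqr in *. nra.
Qed.

Lemma Cabs_add : forall z w, Cabs (Cadd z w) <= Cabs z + Cabs w.
Proof.
  intros. apply Cabs_le_sq. pose proof (Cabs_nonneg z); pose proof (Cabs_nonneg w); lra.
  replace ((Cabs z + Cabs w) * (Cabs z + Cabs w)) with (Cabs z * Cabs z + Cabs w * Cabs w + 2 * (Cabs z * Cabs w)) by ring.
  rewrite !Cabs_sq. pose proof (CS2 (Cre z) (Cim z) (Cre w) (Cim w)). apply Rabs_le_inv in H.
  unfold Cabs, Cnorm2 in *; simpl. nra.
Qed.

Lemma Cabs_sub : forall z w, Cabs (Csub z w) <= Cabs z + Cabs w.
Proof.
  intros. replace (Csub z w) with (Cadd z (Cscal (-1) w)).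
  replace (Cabs w) with (Cabs (Cscal (-1) w)). apply Cabs_add.
  unfold Cabs, Cnorm2, Cscal; simpl; f_equal; ring.
  apply Cx_eq; simpl; ring.
Qed.

Lemma Cabs_opp_sub : forall z w, Cabs (Csub z w) = Cabs (Csub w z).
Proof. intros; unfold Cabs, Cnorm2, Csub; simpl; f_equal; ring. Qed.

Lemma Cabs_triang3 : forall z w u, Cabs (Csub z u) <= Cabs (Csub z w) + Cabs (Csub w u).
Proof.
  intros. replace (Csub z u) with (Cadd (Csub z w) (Csub w u)) by (apply Cx_eq; simpl; ring). apply Cabs_add.
Qed.

Definition ASC (f : Z -> Cx) := AS (fun k => Cabs (f k)).

Lemma ASC_re : forall f, ASC f -> AS (fun k => Cre (f k)).
Proof. intros. eapply AS_dom; [|apply H]. intros; apply Cre_le. Qed.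
Lemma ASC_im : forall f, ASC f -> AS (fun k => Cim (f k)).
Proof. intros. eapply AS_dom; [|apply H]. intros; apply Cim_le. Qed.

Lemma ASC_dom : forall f g, (forall k, Cabs (f k) <= g k) -> AS g -> ASC f.
Proof. intros. unfold ASC. eapply AS_dom; [|apply H0]. intros; rewrite Rabs_right; auto. apply Rle_ge, Cabs_nonneg. Qed.

Lemma ASC_add : forall f g, ASC f -> ASC g -> ASC (fun k => Cadd (f k) (g k)).
Proof. intros. eapply ASC_dom; [|apply (AS_plus _ _ H H0)]. intros; apply Cabs_add. Qed.

Lemma ASC_sub : forall f g, ASC f -> ASC g -> ASC (fun k => Csub (f k) (g k)).
Proof. intros. eapply ASC_dom; [|apply (AS_plus _ _ H H0)]. intros; apply Cabs_sub. Qed.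

Lemma ASC_mul : forall c f, ASC f -> ASC (fun k => Cmul c (f k)).
Proof. intros. eapply ASC_dom; [|apply (AS_scal _ (Cabs c) H)]. intros; rewrite Cabs_mul; lra. Qed.

Lemma ASC_scal : forall r f, ASC f -> ASC (fun k => Cscal r (f k)).
Proof. intros. eapply ASC_dom; [|apply (AS_scal _ (Rabs r) H)]. intros; rewrite Cabs_scal; lra. Qed.

Lemma ASC_ext : forall f g, (forall k, f k = g k) -> ASC f -> ASC g.
Proof. intros. eapply ASC_dom; [|apply H0]. intros; rewrite <- H; lra. Qed.

Lemma ZsumC_ext : forall f g, (forall k, f k = g k) -> ZsumC f = ZsumC g.
Proof. intros. f_equal. apply functional_extensionality; auto. Qed.

Lemma ZsumC_add : forall f g, ASC f -> ASC g -> ZsumC (fun k => Cadd (f k) (g k)) = Cadd (ZsumC f) (ZsumC g).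
Proof.
  intros. unfold ZsumC, Cadd; simpl. f_equal; apply Zsum_plus; auto using ASC_re, ASC_im.
Qed.

Lemma ZsumC_sub : forall f g, ASC f -> ASC g -> ZsumC (fun k => Csub (f k) (g k)) = Csub (ZsumC f) (ZsumC g).
Proof.
  intros. unfold ZsumC, Csub; simpl. f_equal; apply Zsum_minus; auto using ASC_re, ASC_im.
Qed.

Lemma ZsumC_mul : forall c f, ASC f -> ZsumC (fun k => Cmul c (f k)) = Cmul c (ZsumC f).
Proof.
  intros. unfold ZsumC, Cmul; simpl. f_equal.
  - rewrite <- !Zsum_scal by auto using ASC_re, ASC_im. rewrite <- Zsum_minus.
    apply Zsum_ext; intros; ring. apply AS_scal, ASC_re; auto. apply AS_scal, ASC_im; auto.
  - rewrite <- !Zsum_scal by auto using ASC_re, ASC_im. rewrite <- Zsum_plus.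
    apply Zsum_ext; intros; ring. apply AS_scal, ASC_im; auto. apply AS_scal, ASC_re; auto.
Qed.

Lemma ZsumC_scal : forall r f, ASC f -> ZsumC (fun k => Cscal r (f k)) = Cscal r (ZsumC f).
Proof.
  intros. unfold ZsumC, Cscal; simpl. f_equal; apply Zsum_scal; auto using ASC_re, ASC_im.
Qed.

Lemma ZsumC_conj : forall f, ASC f -> ZsumC (fun k => Cconj (f k)) = Cconj (ZsumC f).
Proof.
  intros. unfold ZsumC, Cconj; simpl. f_equal. apply Zsum_opp, ASC_im; auto.
Qed.

Lemma ZsumC_abs : forall f, ASC f -> Cabs (ZsumC f) <= Zsum (fun k => Cabs (f k)).
Proof.
  intros f H. set (S := ZsumC f).
  assert (E : Cnorm2 S = Zsum (fun k => Cre S * Cre (f k) + Cim S * Cim (f k))).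
  { rewrite Zsum_plus by (apply AS_scal; first [apply ASC_re|apply ASC_im]; auto).
    rewrite !Zsum_scal by (first [apply ASC_re|apply ASC_im]; auto).
    unfold Cnorm2, S, ZsumC; simpl; ring. }
  assert (L : Cnorm2 S <= Cabs S * Zsum (fun k => Cabs (f k))).
  { rewrite E, <- Zsum_scal by auto. apply Zsum_le.
    apply AS_plus; apply AS_scal; auto using ASC_re, ASC_im. apply AS_scal; auto.
    intros k. pose proof (CS2 (Cre S) (Cim S) (Cre (f k)) (Cim (f k))). apply Rabs_le_inv in H0.
    unfold Cabs, Cnorm2 in *. lra. }
  rewrite <- Cabs_sq in L. pose proof (Cabs_nonneg S).
  pose proof (Zsum_nonneg (fun k => Cabs (f k)) (fun k => Cabs_nonneg _)).
  destruct (Req_dec (Cabs S) 0) as [->|Hn]. lra.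
  apply (Rmult_le_reg_l (Cabs S)). lra. lra.
Qed.

Definition BoxBC (F : Z -> Z -> Cx) B := BoxB (fun j k => Cabs (F j k)) B.

Lemma FubiniC : forall F B, BoxBC F B ->
  ZsumC (fun j => ZsumC (fun k => F j k)) = ZsumC (fun k => ZsumC (fun j => F j k)).
Proof.
  intros F B H. unfold ZsumC; simpl. f_equal.
  - apply (Fubini (fun j k => Cre (F j k)) B). intros N. eapply Rle_trans; [|apply (H N)].
    apply SB_le; intros; apply SB_le; intros. rewrite (Rabs_right (Cabs _)) by (apply Rle_ge, Cabs_nonneg). apply Cre_le.
  - apply (Fubini (fun j k => Cim (F j k)) B). intros N. eapply Rle_trans; [|apply (H N)].
    apply SB_le; intros; apply SB_le; intros. rewrite (Rabs_right (Cabs _)) by (apply Rle_ge, Cabs_nonneg). apply Cim_le.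
Qed.

Lemma BoxBC_row : forall F B j, BoxBC F B -> ASC (F j).
Proof. intros. unfold ASC. exact (BoxB_row _ B j H). Qed.

Lemma quad_disc : forall S A B, 0 <= A -> (forall t, 2 * t * S <= t * t * A + B) -> S * S <= A * B.
Proof.
  intros S A B HA H. destruct (Req_dec A 0) as [->|HA'].
  - destruct (Req_dec S 0) as [->|HS]. pose proof (H 0). nra.
    exfalso. pose proof (H ((B + 1) / (2 * S))). 
    replace (2 * ((B + 1) / (2 * S)) * S) with (B + 1) in H0 by (field; auto). lra.
  - pose proof (H (S / A)). replace (2 * (S / A) * S) with (2 * (S * S) / A) in H0 by (field; auto).
    replace (S / A * (S / A) * A) with ((S * S) / A) in H0 by (field; auto).
    assert (S * S / A <= B) by lra. apply (Rmult_le_compat_l A) in H1; [|lra].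
    replace (A * (S * S / A)) with (S * S) in H1 by (field; auto). lra.
Qed.

Lemma CS_real : forall f g, (forall k, 0 <= f k) -> (forall k, 0 <= g k) ->
  AS (fun k => f k * f k) -> AS (fun k => g k * g k) ->
  AS (fun k => f k * g k) /\
  Zsum (fun k => f k * g k) * Zsum (fun k => f k * g k) <= Zsum (fun k => f k * f k) * Zsum (fun k => g k * g k).
Proof.
  intros f g Hf Hg H1 H2.
  assert (H3 : AS (fun k => f k * g k)).
  { eapply AS_dom; [|apply (AS_scal _ (/2) (AS_plus _ _ H1 H2))]. intros k.
    specialize (Hf k); specialize (Hg k). rewrite Rabs_right by nra. pose proof (Rle_0_sqr (f k - g k)); unfold Rsqr in *; nra. }
  split; auto. apply quad_disc. apply Zsum_nonneg; intros; nra.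
  intros t. rewrite <- (Zsum_scal (fun k => f k * g k) (2*t) H3).
  rewrite <- (Zsum_scal (fun k => f k * f k) (t*t) H1).
  rewrite <- (Zsum_plus _ _ (AS_scal _ (t*t) H1) H2).
  apply Zsum_le. apply AS_scal; auto. apply AS_plus; try apply AS_scal; auto.
  intros k. pose proof (Rle_0_sqr (t * f k - g k)). unfold Rsqr in *. nra.
Qed.

Lemma sqrt_CS : forall S A B, 0 <= S -> 0 <= A -> 0 <= B -> S * S <= A * B -> S <= sqrt A * sqrt B.
Proof.
  intros. rewrite <- sqrt_mult by auto. rewrite <- (sqrt_square S) by auto. apply sqrt_le_1; nra.
Qed.

Definition nsq (phi : seqZ) := fun k => Cnorm2 (phi k).
Definition l2sq (phi : seqZ) := Zsum (fun k => Cnorm2 (phi k)).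

Lemma in_l2_AS : forall phi, in_l2 phi <-> AS (fun k => Cnorm2 (phi k)).
Proof.
  intros phi. split.
  - intros [l [l1 [l2 [H1 [H2 ->]]]]]. apply (AS_nonneg_bound _ (l1 + l2)). intros; apply Cnorm2_nonneg.
    intros N. rewrite SB_split.
    assert (G1 : Un_growing (sum_f_R0 (fun n => Cnorm2 (phi (Z.of_nat n))))).
    { intros n; rewrite tech5. pose proof (Cnorm2_nonneg (phi (Z.of_nat (S n)))); lra. }
    assert (G2 : Un_growing (sum_f_R0 (fun n => Cnorm2 (phi (- Z.of_nat (S n))%Z)))).
    { intros n; rewrite tech5. pose proof (Cnorm2_nonneg (phi (- Z.of_nat (S (S n)))%Z)); lra. }
    pose proof (growing_ineq _ _ G1 H1 N). pose proof (growing_ineq _ _ G2 H2 N). lra.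
  - intros H. exists (Zsum (fun k => Cnorm2 (phi k))). apply Zsum_ZSumTo; auto.
Qed.

Lemma l2sq_nonneg : forall phi, 0 <= l2sq phi.
Proof. intros; apply Zsum_nonneg; intros; apply Cnorm2_nonneg. Qed.

Lemma l2norm_nonneg : forall phi, 0 <= l2norm phi.
Proof. intros; apply sqrt_pos. Qed.

Lemma l2norm_sq : forall phi, l2norm phi * l2norm phi = l2sq phi.
Proof. intros; unfold l2norm; apply sqrt_sqrt, l2sq_nonneg. Qed.

Lemma l2_term : forall phi k, in_l2 phi -> Cabs (phi k) <= l2norm phi.
Proof.
  intros. apply Cabs_le_sq. apply l2norm_nonneg. rewrite l2norm_sq. unfold l2sq; apply (term_le_Zsum (fun k => Cnorm2 (phi k))).
  apply in_l2_AS; auto. intros; apply Cnorm2_nonneg.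
Qed.

Lemma Cnorm2_abs : forall z, Cnorm2 z = Cabs z * Cabs z.
Proof. intros; rewrite Cabs_sq; auto. Qed.

Lemma in_l2_dom : forall phi g, (forall k, Cnorm2 (phi k) <= g k) -> AS g -> in_l2 phi.
Proof. intros. apply in_l2_AS. eapply AS_dom; [|apply H0]. intros; rewrite Rabs_right; auto. apply Rle_ge, Cnorm2_nonneg. Qed.

Lemma Cnorm2_add_le : forall z w, Cnorm2 (Cadd z w) <= 2 * (Cnorm2 z + Cnorm2 w).
Proof. intros; unfold Cnorm2, Cadd; simpl. pose proof (Rle_0_sqr (Cre z - Cre w)); pose proof (Rle_0_sqr (Cim z - Cim w)); unfold Rsqr in *. nra. Qed.
Lemma Cnorm2_sub_le : forall z w, Cnorm2 (Csub z w) <= 2 * (Cnorm2 z + Cnorm2 w).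
Proof. intros; unfold Cnorm2, Csub; simpl. pose proof (Rle_0_sqr (Cre z + Cre w)); pose proof (Rle_0_sqr (Cim z + Cim w)); unfold Rsqr in *. nra. Qed.

Lemma in_l2_add : forall phi psi, in_l2 phi -> in_l2 psi -> in_l2 (vadd phi psi).
Proof.
  intros. apply in_l2_AS in H; apply in_l2_AS in H0. eapply in_l2_dom; [|apply (AS_scal _ 2 (AS_plus _ _ H H0))].
  intros; apply Cnorm2_add_le.
Qed.
Lemma in_l2_sub : forall phi psi, in_l2 phi -> in_l2 psi -> in_l2 (vsub phi psi).
Proof.
  intros. apply in_l2_AS in H; apply in_l2_AS in H0. eapply in_l2_dom; [|apply (AS_scal _ 2 (AS_plus _ _ H H0))].
  intros; apply Cnorm2_sub_le.
Qed.
Lemma in_l2_mul : forall (c : Z -> Cx) phi M, (forall k, Cabs (c k) <= M) -> in_l2 phi -> in_l2 (fun k => Cmul (c k) (phi k)).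
Proof.
  intros. apply in_l2_AS in H0. eapply in_l2_dom; [|apply (AS_scal _ (M * M) H0)].
  intros; rewrite Cnorm2_mul, !Cnorm2_abs. specialize (H k). pose proof (Cabs_nonneg (c k)). pose proof (Cabs_nonneg (phi k)).
  apply Rmult_le_compat_r. nra. nra.
Qed.
Lemma in_l2_scal : forall c phi, in_l2 phi -> in_l2 (vscal c phi).
Proof. intros. unfold vscal. apply (in_l2_mul (fun _ => c) phi (Cabs c)); auto. intros; lra. Qed.
Lemma in_l2_ext : forall phi psi, (forall k, phi k = psi k) -> in_l2 phi -> in_l2 psi.
Proof. intros. eapply in_l2_dom; [|apply in_l2_AS; apply H0]. intros; rewrite <- H; lra. Qed.

Lemma CS_l2 : forall phi psi, in_l2 phi -> in_l2 psi ->
  AS (fun k => Cabs (phi k) * Cabs (psi k)) /\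
  Zsum (fun k => Cabs (phi k) * Cabs (psi k)) <= l2norm phi * l2norm psi.
Proof.
  intros phi psi H1 H2. apply in_l2_AS in H1; apply in_l2_AS in H2.
  assert (E1 : AS (fun k => Cabs (phi k) * Cabs (phi k))) by (eapply AS_ext; [|apply H1]; intros; simpl; rewrite Cabs_sq; auto).
  assert (E2 : AS (fun k => Cabs (psi k) * Cabs (psi k))) by (eapply AS_ext; [|apply H2]; intros; simpl; rewrite Cabs_sq; auto).
  destruct (CS_real _ _ (fun k => Cabs_nonneg _) (fun k => Cabs_nonneg _) E1 E2) as [H3 H4].
  split; auto. unfold l2norm. apply sqrt_CS. apply Zsum_nonneg; intros; apply Rmult_le_pos; apply Cabs_nonneg.
  apply Zsum_nonneg; intros; apply Cnorm2_nonneg. apply Zsum_nonneg; intros; apply Cnorm2_nonneg.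
  rewrite (Zsum_ext (fun k => Cnorm2 (phi k)) (fun k => Cabs (phi k) * Cabs (phi k))) by (intros; rewrite Cabs_sq; auto).
  rewrite (Zsum_ext (fun k => Cnorm2 (psi k)) (fun k => Cabs (psi k) * Cabs (psi k))) by (intros; rewrite Cabs_sq; auto).
  apply H4.
Qed.

Lemma ASC_inner : forall phi psi, in_l2 phi -> in_l2 psi -> ASC (fun k => Cmul (Cconj (phi k)) (psi k)).
Proof.
  intros. destruct (CS_l2 phi psi H H0) as [H1 _]. eapply ASC_dom; [|apply H1].
  intros; rewrite Cabs_mul, Cabs_conj; lra.
Qed.

Lemma inner_CS : forall phi psi, in_l2 phi -> in_l2 psi -> Cabs (inner phi psi) <= l2norm phi * l2norm psi.
Proof.
  intros. unfold inner. eapply Rle_trans. apply ZsumC_abs, ASC_inner; auto.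
  destruct (CS_l2 phi psi H H0) as [H1 H2]. eapply Rle_trans; [|apply H2].
  right; apply Zsum_ext; intros; rewrite Cabs_mul, Cabs_conj; auto.
Qed.

Lemma inner_sub_r : forall phi psi1 psi2, in_l2 phi -> in_l2 psi1 -> in_l2 psi2 ->
  inner phi (vsub psi1 psi2) = Csub (inner phi psi1) (inner phi psi2).
Proof.
  intros. unfold inner. rewrite <- ZsumC_sub by (apply ASC_inner; auto).
  apply ZsumC_ext; intros; apply Cx_eq; unfold vsub, Cmul, Csub, Cconj; simpl; ring.
Qed.

Lemma inner_sub_l : forall phi1 phi2 psi, in_l2 phi1 -> in_l2 phi2 -> in_l2 psi ->
  inner (vsub phi1 phi2) psi = Csub (inner phi1 psi) (inner phi2 psi).
Proof.
  intros. unfold inner. rewrite <- ZsumC_sub by (apply ASC_inner; auto).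
  apply ZsumC_ext; intros; apply Cx_eq; unfold vsub, Cmul, Csub, Cconj; simpl; ring.
Qed.

Lemma l2sq_le : forall phi psi, in_l2 psi -> (forall k, Cnorm2 (phi k) <= Cnorm2 (psi k)) -> l2sq phi <= l2sq psi.
Proof.
  intros. apply Zsum_le. apply in_l2_AS. eapply in_l2_dom; [|apply in_l2_AS; apply H]. auto. apply in_l2_AS; auto. auto.
Qed.

Lemma l2norm_le : forall phi psi, in_l2 psi -> (forall k, Cnorm2 (phi k) <= Cnorm2 (psi k)) -> l2norm phi <= l2norm psi.
Proof. intros. unfold l2norm. apply sqrt_le_1. apply l2sq_nonneg. apply l2sq_nonneg. apply l2sq_le; auto. Qed.

Lemma l2norm_le_sq : forall phi r, 0 <= r -> l2sq phi <= r * r -> l2norm phi <= r.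
Proof. intros. unfold l2norm. rewrite <- (sqrt_square r) by auto. apply sqrt_le_1; auto. apply l2sq_nonneg. nra. Qed.

Lemma minkowski : forall phi psi, in_l2 phi -> in_l2 psi -> l2norm (vadd phi psi) <= l2norm phi + l2norm psi.
Proof.
  intros. apply l2norm_le_sq. pose proof (l2norm_nonneg phi); pose proof (l2norm_nonneg psi); lra.
  destruct (CS_l2 phi psi H H0) as [H1 H2].
  apply in_l2_AS in H as H'; apply in_l2_AS in H0 as H0'.
  replace ((l2norm phi + l2norm psi) * (l2norm phi + l2norm psi)) with (l2sq phi + l2sq psi + 2 * (l2norm phi * l2norm psi))
    by (rewrite <- !l2norm_sq; ring).
  unfold l2sq. rewrite <- Zsum_plus by auto. eapply Rle_trans with (Zsum (fun k => Cnorm2 (phi k) + Cnorm2 (psi k)) + 2 * Zsum (fun k => Cabs (phi k) * Cabs (psi k))).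
  2: lra.
  rewrite <- Zsum_scal, <- Zsum_plus by (try apply AS_scal; try apply AS_plus; auto). apply Zsum_le.
  apply in_l2_AS, in_l2_add; auto. apply AS_plus. apply AS_plus; auto. apply AS_scal; auto.
  intros k. unfold vadd. pose proof (Cabs_add (phi k) (psi k)). rewrite !Cnorm2_abs.
  pose proof (Cabs_nonneg (Cadd (phi k) (psi k))). pose proof (Cabs_nonneg (phi k)). pose proof (Cabs_nonneg (psi k)). nra.
Qed.

Lemma vsub_split : forall x y z, vsub x z = vadd (vsub x y) (vsub y z).
Proof. intros. apply functional_extensionality; intros k. apply Cx_eq; unfold vsub, vadd, Csub, Cadd; simpl; ring. Qed.

Lemma l2_triangle : forall x y z, in_l2 x -> in_l2 y -> in_l2 z -> l2norm (vsub x z) <= l2norm (vsub x y) + l2norm (vsub y z).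
Proof. intros. rewrite (vsub_split x y z). apply minkowski; apply in_l2_sub; auto. Qed.

Lemma l2_sub0 : forall x, l2norm (vsub x x) = 0.
Proof.
  intros. unfold l2norm. replace (Zsum (fun k => Cnorm2 (vsub x x k))) with 0. apply sqrt_0.
  symmetry. rewrite (Zsum_ext _ (fun k => 0 * 0)). rewrite Zsum_scal. ring.
  exists 0; intros; unfold SB, hp; rewrite sum_eq_R0; [lra|]; intros; rewrite Rabs_R0; ring.
  intros; unfold vsub, Csub, Cnorm2; simpl; ring.
Qed.

Lemma l2norm_bound : forall x y, in_l2 x -> in_l2 y -> l2norm x <= l2norm (vsub x y) + l2norm y.
Proof.
  intros. replace x with (vadd (vsub x y) y) at 1. apply minkowski; auto. apply in_l2_sub; auto.
  apply functional_extensionality; intros; apply Cx_eq; unfold vadd, vsub; simpl; ring.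
Qed.

Definition cvl2 (u : nat -> seqZ) (phi : seqZ) :=
  (forall n, in_l2 (u n)) /\ in_l2 phi /\ Un_cv (fun n => l2norm (vsub (u n) phi)) 0.

Definition CvC (z : nat -> Cx) (l : Cx) := Un_cv (fun n => Cabs (Csub (z n) l)) 0.



Lemma CvC_unique : forall z l1 l2, CvC z l1 -> CvC z l2 -> l1 = l2.
Proof.
  intros z l1 l2 H1 H2.
  assert (H : Un_cv (fun n => Cabs (Csub (z n) l1) + Cabs (Csub (z n) l2)) 0).
  { replace 0 with (0 + 0) by ring. apply CV_plus; auto. }
  assert (L : Cabs (Csub l1 l2) <= 0).
  { apply (lim_ge_const (fun n => Cabs (Csub (z n) l1) + Cabs (Csub (z n) l2))); auto.
    intros n. rewrite (Cabs_opp_sub (z n) l1). apply Cabs_triang3. }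
  pose proof (Cabs_nonneg (Csub l1 l2)). assert (E : Cabs (Csub l1 l2) * Cabs (Csub l1 l2) = 0) by nra.
  rewrite Cabs_sq in E. unfold Cnorm2, Csub in E; simpl in E.
  pose proof (Rle_0_sqr (Cre l1 - Cre l2)). pose proof (Rle_0_sqr (Cim l1 - Cim l2)). unfold Rsqr in *.
  assert (Hx : (Cre l1 - Cre l2) * (Cre l1 - Cre l2) = 0) by lra.
  assert (Hy : (Cim l1 - Cim l2) * (Cim l1 - Cim l2) = 0) by lra.
  apply Rmult_integral in Hx; apply Rmult_integral in Hy.
  apply Cx_eq; destruct Hx; destruct Hy; lra.
Qed.

Lemma CvC_sub : forall z w l m, CvC z l -> CvC w m -> CvC (fun n => Csub (z n) (w n)) (Csub l m).
Proof.
  intros. eapply cv_squeeze0. 2: { replace 0 with (0 + 0) by ring. apply CV_plus; [apply H|apply H0]. }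
  intros n; split. apply Cabs_nonneg.
  replace (Csub (Csub (z n) (w n)) (Csub l m)) with (Csub (Csub (z n) l) (Csub (w n) m)) by (apply Cx_eq; simpl; ring).
  apply Cabs_sub.
Qed.

Lemma CvC_ext : forall z w l, (forall n, z n = w n) -> CvC z l -> CvC w l.
Proof. intros. eapply cv_ext; [|apply H0]. intros; simpl; rewrite H; auto. Qed.

Lemma inner_cont : forall x xn y yn, cvl2 xn x -> cvl2 yn y -> CvC (fun n => inner (xn n) (yn n)) (inner x y).
Proof.
  intros x xn y yn [Hx1 [Hx2 Hx3]] [Hy1 [Hy2 Hy3]].
  eapply cv_squeeze0.
  2:{ assert (Hc : Un_cv (fun n => l2norm (vsub (xn n) x) * (l2norm (vsub (yn n) y) + l2norm y) + l2norm x * l2norm (vsub (yn n) y)) (0 * (0 + l2norm y) + l2norm x * 0)).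
      { apply CV_plus. apply CV_mult; auto. apply CV_plus; auto. apply cv_const. apply CV_mult; auto. apply cv_const. }
      replace (0 * (0 + l2norm y) + l2norm x * 0) with 0 in Hc by ring. exact Hc. }
  intros n. split. apply Cabs_nonneg.
  replace (Csub (inner (xn n) (yn n)) (inner x y)) with (Cadd (inner (vsub (xn n) x) (yn n)) (inner x (vsub (yn n) y))).
  2:{ rewrite inner_sub_l, inner_sub_r by auto. apply Cx_eq; simpl; ring. }
  eapply Rle_trans. apply Cabs_add. apply Rplus_le_compat.
  - eapply Rle_trans. apply inner_CS. apply in_l2_sub; auto. auto.
    apply Rmult_le_compat_l. apply l2norm_nonneg.
    rewrite Rplus_comm. eapply Rle_trans. apply (l2norm_bound (yn n) y); auto. lra.
  - apply inner_CS; auto. apply in_l2_sub; auto.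
Qed.

Definition nice_op (B : seqZ -> seqZ) (S : R) :=
  (forall phi, in_l2 phi -> in_l2 (B phi)) /\
  (forall phi psi, in_l2 phi -> in_l2 psi -> B (vsub phi psi) = vsub (B phi) (B psi)) /\
  (forall phi, in_l2 phi -> l2norm (B phi) <= S * l2norm phi).

Lemma nice_cv : forall B S u phi, nice_op B S -> cvl2 u phi -> cvl2 (fun n => B (u n)) (B phi).
Proof.
  intros B S u phi [H1 [H2 H3]] [U1 [U2 U3]]. split; [|split]; auto.
  eapply cv_squeeze0; [|apply (cv_le_0 _ U3 S)]. intros n. split. apply l2norm_nonneg.
  rewrite <- H2 by auto. apply H3. apply in_l2_sub; auto.
Qed.

Lemma abstract_comm : forall a B SB0 L SL0,
  nice_op B SB0 -> nice_op L SL0 ->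
  (forall u, domX u -> in_l2 (A0 a u)) ->
  (forall u v, domX u -> domX v ->
     Csub (inner (A0 a u) (B v)) (inner u (B (A0 a v))) = inner u (L v)) ->
  forall phi chi psi omega, Agraph a phi chi -> Agraph a psi omega ->
    Csub (inner chi (B psi)) (inner phi (B omega)) = inner phi (L psi).
Proof.
  intros a B SB0 L SL0 HB HL HA Hid phi chi psi omega [P1 [C1 [u [Hu1 [Hu2 Hu3]]]]] [P2 [C2 [v [Hv1 [Hv2 Hv3]]]]].
  assert (CU : cvl2 u phi) by (split; [intros n; apply Hu1|split; auto]).
  assert (CAU : cvl2 (fun n => A0 a (u n)) chi) by (split; [intros n; apply HA, Hu1|split; auto]).
  assert (CV : cvl2 v psi) by (split; [intros n; apply Hv1|split; auto]).
  assert (CAV : cvl2 (fun n => A0 a (v n)) omega) by (split; [intros n; apply HA, Hv1|split; auto]).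
  pose proof (inner_cont _ _ _ _ CAU (nice_cv _ _ _ _ HB CV)) as T1.
  pose proof (inner_cont _ _ _ _ CU (nice_cv _ _ _ _ HB CAV)) as T2.
  pose proof (inner_cont _ _ _ _ CU (nice_cv _ _ _ _ HL CV)) as T3.
  pose proof (CvC_sub _ _ _ _ T1 T2) as T12.
  apply (CvC_unique (fun n => inner (u n) (L (v n)))); auto.
  eapply CvC_ext; [|apply T12]. intros n; simpl. apply Hid; auto.
Qed.

Lemma C1_of_comm : forall a B SB0 L SL0,
  bounded_op B -> nice_op B SB0 -> nice_op L SL0 ->
  (forall u, domX u -> in_l2 (A0 a u)) ->
  (forall u v, domX u -> domX v ->
     Csub (inner (A0 a u) (B v)) (inner u (B (A0 a v))) = inner u (L v)) ->
  Defs.C1 a B /\ (forall phi chi psi omega, Agraph a phi chi -> Agraph a psi omega ->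
    inner phi (L psi) = Csub (inner chi (B psi)) (inner phi (B omega))).
Proof.
  intros a B SB0 L SL0 Hb HB HL HA Hid.
  pose proof (abstract_comm a B SB0 L SL0 HB HL HA Hid) as E.
  split.
  - split; auto. exists SL0. intros phi chi psi omega G1 G2. rewrite (E _ _ _ _ G1 G2).
    destruct G1 as [P1 _]; destruct G2 as [P2 _]. destruct HL as [L1 [_ L3]].
    eapply Rle_trans. apply inner_CS; auto. 
    replace (SL0 * l2norm phi * l2norm psi) with (l2norm phi * (SL0 * l2norm psi)) by ring.
    apply Rmult_le_compat_l. apply l2norm_nonneg. auto.
  - intros; symmetry; apply E; auto.
Qed.

Definition Kop (K : Z -> Z -> Cx) (phi : seqZ) : seqZ := fun j => ZsumC (fun l => Cmul (K j l) (phi l)).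

Definition SK (K : Z -> Z -> Cx) (S : R) :=
  (forall j, AS (fun l => Cabs (K j l)) /\ Zsum (fun l => Cabs (K j l)) <= S) /\
  (forall l, AS (fun j => Cabs (K j l)) /\ Zsum (fun j => Cabs (K j l)) <= S).

Lemma SK_bound : forall K S j l, SK K S -> Cabs (K j l) <= S.
Proof.
  intros K S j l [H _]. destruct (H j) as [H1 H2]. eapply Rle_trans; [|apply H2].
  apply (term_le_Zsum (fun l => Cabs (K j l))); auto. intros; apply Cabs_nonneg.
Qed.

Lemma SK_nonneg : forall K S, SK K S -> 0 <= S.
Proof. intros. pose proof (SK_bound K S 0%Z 0%Z H). pose proof (Cabs_nonneg (K 0%Z 0%Z)). lra. Qed.

Lemma Kop_row : forall K S phi j, SK K S -> in_l2 phi -> ASC (fun l => Cmul (K j l) (phi l)).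
Proof.
  intros K S phi j HK Hphi. apply in_l2_AS in Hphi.
  destruct HK as [HK1 HK2]. destruct (HK1 j) as [A1 _].
  eapply ASC_dom; [|apply (AS_plus _ _ (AS_scal _ (/2) A1) (AS_scal _ (S/2) Hphi))].
  intros l. rewrite Cabs_mul. pose proof (SK_bound K S j l (conj HK1 HK2)).
  pose proof (Cabs_nonneg (K j l)). pose proof (Cabs_nonneg (phi l)). rewrite Cnorm2_abs.
  pose proof (Rle_0_sqr (Cabs (phi l) - 1)). unfold Rsqr in *. nra.
Qed.

Lemma Kop_point : forall K S phi j, SK K S -> in_l2 phi ->
  AS (fun l => Cabs (K j l) * Cnorm2 (phi l)) /\
  Cnorm2 (Kop K phi j) <= S * Zsum (fun l => Cabs (K j l) * Cnorm2 (phi l)).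
Proof.
  intros K S phi j HK Hphi. pose proof (Kop_row K S phi j HK Hphi) as R.
  assert (HS := SK_nonneg K S HK).
  apply in_l2_AS in Hphi as Hphi'. destruct HK as [HK1 HK2]. destruct (HK1 j) as [A1 A2].
  assert (G : AS (fun l => Cabs (K j l) * Cnorm2 (phi l))).
  { eapply AS_dom; [|apply (AS_scal _ S Hphi')]. intros l. pose proof (SK_bound K S j l (conj HK1 HK2)).
    rewrite Rabs_right. apply Rmult_le_compat_r. apply Cnorm2_nonneg. auto.
    apply Rle_ge, Rmult_le_pos. apply Cabs_nonneg. apply Cnorm2_nonneg. }
  split; auto.
  set (f := fun l => sqrt (Cabs (K j l))). set (g := fun l => sqrt (Cabs (K j l)) * Cabs (phi l)).
  assert (ff : forall l, f l * f l = Cabs (K j l)) by (intros; unfold f; apply sqrt_sqrt, Cabs_nonneg).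
  destruct (CS_real f g) as [C1 C2].
  - intros; apply sqrt_pos.
  - intros; unfold g; apply Rmult_le_pos. apply sqrt_pos. apply Cabs_nonneg.
  - refine (AS_ext _ _ _ A1). intros l; simpl; rewrite ff; auto.
  - refine (AS_ext _ _ _ G). intros l; simpl; unfold g. rewrite Cnorm2_abs.
    replace (sqrt (Cabs (K j l)) * Cabs (phi l) * (sqrt (Cabs (K j l)) * Cabs (phi l))) with (f l * f l * (Cabs (phi l) * Cabs (phi l))) by (unfold f; ring).
    rewrite ff; auto.
  - assert (E1 : Zsum (fun k => f k * f k) = Zsum (fun l => Cabs (K j l))) by (apply Zsum_ext; auto).
    assert (E2 : Zsum (fun k => g k * g k) = Zsum (fun l => Cabs (K j l) * Cnorm2 (phi l))).
    { apply Zsum_ext; intros; unfold g. rewrite Cnorm2_abs.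
      replace (sqrt (Cabs (K j k)) * Cabs (phi k) * (sqrt (Cabs (K j k)) * Cabs (phi k))) with (f k * f k * (Cabs (phi k) * Cabs (phi k))) by (unfold f; ring).
      rewrite ff; auto. }
    assert (E3 : Zsum (fun k => f k * g k) = Zsum (fun l => Cabs (K j l) * Cabs (phi l))).
    { apply Zsum_ext; intros; unfold g. replace (f k * (sqrt (Cabs (K j k)) * Cabs (phi k))) with (f k * f k * Cabs (phi k)) by (unfold f; ring). rewrite ff; auto. }
    rewrite E1, E2, E3 in C2.
    assert (T : Cabs (Kop K phi j) <= Zsum (fun l => Cabs (K j l) * Cabs (phi l))).
    { unfold Kop. eapply Rle_trans. apply ZsumC_abs; auto. right; apply Zsum_ext; intros; apply Cabs_mul. }
    rewrite Cnorm2_abs. pose proof (Cabs_nonneg (Kop K phi j)).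
    assert (0 <= Zsum (fun l => Cabs (K j l) * Cnorm2 (phi l))) by (apply Zsum_nonneg; intros; apply Rmult_le_pos; [apply Cabs_nonneg|apply Cnorm2_nonneg]).
    eapply Rle_trans. apply Rmult_le_compat; eauto. 
    eapply Rle_trans. apply C2. apply Rmult_le_compat_r; auto.
Qed.

Lemma Kop_l2 : forall K S phi, SK K S -> in_l2 phi -> in_l2 (Kop K phi) /\ l2norm (Kop K phi) <= S * l2norm phi.
Proof.
  intros K S phi HK Hphi. assert (HS := SK_nonneg K S HK).
  apply in_l2_AS in Hphi as Hphi'.
  set (F := fun j l => Cabs (K j l) * Cnorm2 (phi l)).
  assert (Fnn : forall j l, 0 <= F j l) by (intros; unfold F; apply Rmult_le_pos; [apply Cabs_nonneg|apply Cnorm2_nonneg]).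
  assert (BB : BoxB F (S * l2sq phi)).
  { intros N. rewrite SB_exchange. eapply Rle_trans.
    - apply SB_le. intros l. instantiate (1 := fun l => S * Cnorm2 (phi l)). simpl.
      erewrite SB_ext; [|intros; rewrite Rabs_right by (apply Rle_ge, Fnn); reflexivity]. unfold F.
      erewrite SB_ext; [|intros; rewrite Rmult_comm; reflexivity]. rewrite SB_scal. rewrite Rmult_comm.
      apply Rmult_le_compat_r. apply Cnorm2_nonneg. eapply Rle_trans. apply SB_le_Zsum.
      apply (proj2 HK l). intros; apply Cabs_nonneg. apply (proj2 HK l).
    - rewrite SB_scal. apply Rmult_le_compat_l; auto. apply SB_le_Zsum; auto. intros; apply Cnorm2_nonneg. }
  destruct (Fubini_col_AS F _ BB) as [FA _].
  assert (HL : in_l2 (Kop K phi)).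
  { eapply in_l2_dom; [|apply (AS_scal _ S FA)]. intros j. apply (Kop_point K S phi j HK Hphi). }
  split; auto. apply l2norm_le_sq. apply Rmult_le_pos; auto; apply l2norm_nonneg.
  replace (S * l2norm phi * (S * l2norm phi)) with (S * (S * l2sq phi)) by (rewrite <- l2norm_sq; ring).
  unfold l2sq. eapply Rle_trans. apply Zsum_le. apply in_l2_AS; auto. apply (AS_scal _ S FA).
  intros j. apply (Kop_point K S phi j HK Hphi). rewrite Zsum_scal by auto.
  apply Rmult_le_compat_l; auto.
  assert (FF := Fubini F _ BB). change (Zsum (fun k => Zsum (F k))) with (Zsum (fun j => Zsum (fun k => F j k))). rewrite FF.
  rewrite <- Zsum_scal by auto. apply Zsum_le.
  - destruct (Fubini_col_AS _ _ (BoxB_trans F _ BB)) as [X _]. apply X.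
  - apply AS_scal; auto.
  - intros l. unfold F. erewrite Zsum_ext; [|intros; rewrite Rmult_comm; reflexivity]. rewrite Zsum_scal.
    rewrite Rmult_comm. apply Rmult_le_compat_r. apply Cnorm2_nonneg. apply (proj2 HK l). apply (proj2 HK l).
Qed.

Lemma Kop_sub : forall K S phi psi, SK K S -> in_l2 phi -> in_l2 psi ->
  Kop K (vsub phi psi) = vsub (Kop K phi) (Kop K psi).
Proof.
  intros. apply functional_extensionality; intros j. unfold Kop, vsub.
  rewrite <- ZsumC_sub by (eapply Kop_row; eauto). apply ZsumC_ext; intros; apply Cx_eq; simpl; ring.
Qed.

Lemma Kop_nice : forall K S, SK K S -> nice_op (Kop K) S.
Proof.
  intros K S H. split; [|split].
  - intros; apply (Kop_l2 K S); auto.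
  - intros; apply (Kop_sub K S); auto.
  - intros; apply (Kop_l2 K S); auto.
Qed.

Lemma Kop_bounded : forall K S, SK K S -> bounded_op (Kop K).
Proof.
  intros K S H. split; [|split].
  - intros; apply (Kop_l2 K S); auto.
  - intros phi psi c H1 H2 j. unfold Kop, vadd, vscal.
    rewrite <- ZsumC_mul by (eapply Kop_row; eauto). rewrite <- ZsumC_add.
    apply ZsumC_ext; intros; apply Cx_eq; simpl; ring.
    eapply Kop_row; eauto. apply ASC_mul. eapply Kop_row; eauto.
  - exists S. intros; apply (Kop_l2 K S); auto.
Qed.

Lemma SK_of_W : forall K W, (forall j l, Cabs (K j l) <= W (j - l)%Z) -> AS W -> SK K (Zsum W).
Proof.
  intros K W H HW. split.
  - intros j. assert (A := AS_reind j W HW).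
    assert (A' : AS (fun l => Cabs (K j l))) by (eapply AS_dom; [|apply A]; intros; rewrite Rabs_right; auto; apply Rle_ge, Cabs_nonneg).
    split; auto. rewrite <- (Zsum_reind j W HW). apply Zsum_le; auto.
  - intros l. assert (A := AS_sub l W HW).
    assert (A' : AS (fun j => Cabs (K j l))) by (eapply AS_dom; [|apply A]; intros; rewrite Rabs_right; auto; apply Rle_ge, Cabs_nonneg).
    split; auto. rewrite <- (Zsum_sub l W HW). apply Zsum_le; auto.
Qed.

Lemma Dop_props : forall gamma M, (forall k, Cabs (gamma k) <= M) ->
  bounded_op (Dop gamma) /\ nice_op (Dop gamma) M.
Proof.
  intros gamma M H.
  assert (HM : 0 <= M) by (pose proof (H 0%Z); pose proof (Cabs_nonneg (gamma 0%Z)); lra).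
  assert (L2 : forall phi, in_l2 phi -> in_l2 (Dop gamma phi)) by (intros; apply (in_l2_mul gamma phi M); auto).
  assert (NB : forall phi, in_l2 phi -> l2norm (Dop gamma phi) <= M * l2norm phi).
  { intros. apply l2norm_le_sq. apply Rmult_le_pos; auto; apply l2norm_nonneg.
    replace (M * l2norm phi * (M * l2norm phi)) with (M * M * l2sq phi) by (rewrite <- l2norm_sq; ring).
    unfold l2sq. rewrite <- Zsum_scal by (apply in_l2_AS; auto). apply Zsum_le. apply in_l2_AS; auto.
    apply AS_scal; apply in_l2_AS; auto.
    intros k. unfold Dop. rewrite Cnorm2_mul, !Cnorm2_abs. specialize (H k). pose proof (Cabs_nonneg (gamma k)).
    apply Rmult_le_compat_r. pose proof (Cabs_nonneg (phi k)); nra. nra. }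
  split; split; auto.
  - split. intros; unfold Dop, vadd, vscal; apply Cx_eq; simpl; ring. exists M; auto.
  - split; auto. intros. apply functional_extensionality; intros; unfold Dop, vsub; apply Cx_eq; simpl; ring.
Qed.

Lemma pow_diff : forall p a b, 0 <= b -> b <= a -> a ^ (S p) - b ^ (S p) <= INR (S p) * (a - b) * a ^ p.
Proof.
  induction p; intros a b Hb Hab.
  - simpl. lra.
  - assert (IH := IHp a b Hb Hab).
    replace (a ^ S (S p) - b ^ S (S p)) with (a * (a ^ S p - b ^ S p) + b ^ S p * (a - b)) by (simpl; ring).
    assert (0 <= b ^ S p) by (apply pow_le; auto).
    assert (b ^ S p <= a ^ S p) by (apply pow_incr; auto).
    assert (0 <= a) by lra.
    rewrite S_INR. replace (a ^ S p) with (a * a ^ p) in * by (simpl; ring).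
    assert (0 <= a ^ p) by (apply pow_le; auto).
    assert (a * (a ^ S p - b ^ S p) <= a * (INR (S p) * (a - b) * a ^ p)) by (apply Rmult_le_compat_l; auto).
    replace (a ^ S p) with (a * a ^ p) in * by (simpl; ring). nra.
Qed.

Definition tpow (x : R) (p n : nat) := INR n ^ p * x ^ n.

Lemma tpow_nonneg : forall x p n, 0 <= x -> 0 <= tpow x p n.
Proof. intros; unfold tpow; apply Rmult_le_pos; apply pow_le; auto; apply pos_INR. Qed.

Lemma tpow_step : forall x p N, 0 <= x -> x < 1 ->
  (1 - x) * sum_f_R0 (tpow x (S p)) N + INR N ^ S p * x ^ S N <= INR (S p) * sum_f_R0 (tpow x p) N.
Proof.
  intros x p N H0 H1. induction N.
  - change (sum_f_R0 (tpow x (S p)) 0) with (tpow x (S p) 0).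
    change (sum_f_R0 (tpow x p) 0) with (tpow x p 0). unfold tpow.
    change (INR 0) with 0. rewrite (pow_i (S p)) by lia. assert (0 <= INR (S p)) by apply pos_INR.
    assert (0 <= 0 ^ p) by (apply pow_le; lra). assert (0 <= x ^ 0) by (apply pow_le; lra). nra.
  - rewrite !tech5. unfold tpow at 2 4.
    pose proof (pow_diff p (INR (S N)) (INR N) (pos_INR _) (le_INR _ _ (Nat.le_succ_diag_r N))).
    rewrite S_INR in H at 1. rewrite (S_INR N) in H at 1. replace (INR N + 1 - INR N) with 1 in H by ring.
    assert (0 <= x ^ S N) by (apply pow_le; auto).
    replace (x ^ S (S N)) with (x * x ^ S N) by (simpl; ring).
    assert (INR (S N) ^ S p * x ^ S N - INR N ^ S p * x ^ S N <= INR (S p) * (INR (S N) ^ p * x ^ S N)).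
    { replace (INR (S N) ^ S p * x ^ S N - INR N ^ S p * x ^ S N) with ((INR (S N) ^ S p - INR N ^ S p) * x ^ S N) by ring.
      replace (INR (S p) * (INR (S N) ^ p * x ^ S N)) with ((INR (S p) * 1 * INR (S N) ^ p) * x ^ S N) by ring.
      apply Rmult_le_compat_r; auto. rewrite S_INR at 1. auto. }
    nra.
Qed.

Lemma tpow_bound : forall x p, 0 <= x -> x < 1 -> exists C, forall N, sum_f_R0 (tpow x p) N <= C.
Proof.
  intros x p H0 H1. induction p.
  - exists (/ (1 - x)). intros N. unfold tpow. simpl.
    rewrite (sum_ext _ (fun n => x ^ n)) by (intros; simpl; ring).
    rewrite tech3 by lra. unfold Rdiv. apply Rle_trans with (1 * / (1 - x)); [|lra].
    apply Rmult_le_compat_r. apply Rlt_le, Rinv_0_lt_compat; lra.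
    assert (0 <= x ^ S N) by (apply pow_le; auto). lra.
  - destruct IHp as [C HC]. exists (INR (S p) * C / (1 - x)). intros N.
    pose proof (tpow_step x p N H0 H1). assert (0 <= INR N ^ S p * x ^ S N) by (apply Rmult_le_pos; apply pow_le; auto; apply pos_INR).
    assert ((1 - x) * sum_f_R0 (tpow x (S p)) N <= INR (S p) * C).
    { eapply Rle_trans with (INR (S p) * sum_f_R0 (tpow x p) N). lra. apply Rmult_le_compat_l. apply pos_INR. auto. }
    apply (Rmult_le_reg_l (1 - x)). lra. replace ((1 - x) * (INR (S p) * C / (1 - x))) with (INR (S p) * C) by (field; lra). auto.
Qed.

Definition ww (a : R) (p : nat) (m : Z) : R := INR (Z.abs_nat m) ^ p * (/ a) ^ (Z.abs_nat m).

Lemma ww_nonneg : forall a p m, 1 < a -> 0 <= ww a p m.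
Proof. intros. unfold ww. apply Rmult_le_pos; apply pow_le. apply pos_INR. left; apply Rinv_0_lt_compat; lra. Qed.

Lemma sum_shift1 : forall f N, sum_f_R0 (fun n => f (S n)) N = sum_f_R0 f (S N) - f 0%nat.
Proof. intros. induction N; simpl in *; try rewrite IHN; ring. Qed.

Lemma ww_AS : forall a p, 1 < a -> AS (ww a p).
Proof.
  intros a p Ha. assert (Hx : 0 <= / a < 1).
  { split. left; apply Rinv_0_lt_compat; lra. rewrite <- Rinv_1. apply Rinv_lt_contravar; lra. }
  destruct (tpow_bound (/ a) p (proj1 Hx) (proj2 Hx)) as [C HC].
  apply (AS_nonneg_bound _ (2 * C)). intros; apply ww_nonneg; auto.
  intros N. unfold SB, hp.
  rewrite (sum_ext _ (fun n => tpow (/a) p n + tpow (/a) p (S n))).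
  2:{ intros n. unfold ww, tpow. rewrite Zabs2Nat.id. replace (Z.abs_nat (- Z.of_nat (S n))) with (S n) by lia. auto. }
  rewrite sum_plus, sum_shift1. pose proof (HC N). pose proof (HC (S N)). pose proof (tpow_nonneg (/a) p 0 (proj1 Hx)).
  pose proof (sum_mono_N (tpow (/a) p) N (S N) (fun n => tpow_nonneg _ _ _ (proj1 Hx)) (Nat.le_succ_diag_r N)). lra.
Qed.

Definition cc (a : R) (m : Z) : R := if Z.eq_dec m 0 then 0 else (/ a) ^ (Z.abs_nat m) / 2.

Lemma cc_nonneg : forall a m, 1 < a -> 0 <= cc a m.
Proof. intros. unfold cc. destruct (Z.eq_dec m 0). lra. apply Rmult_le_pos. apply pow_le. left; apply Rinv_0_lt_compat; lra. lra. Qed.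

Lemma cc_le : forall a m, 1 < a -> cc a m <= ww a 0 m.
Proof. intros. unfold cc, ww; simpl. destruct (Z.eq_dec m 0). rewrite Rmult_1_l. apply pow_le. left; apply Rinv_0_lt_compat; lra.
  assert (0 <= (/a) ^ Z.abs_nat m) by (apply pow_le; left; apply Rinv_0_lt_compat; lra). lra. Qed.

Lemma cc_even : forall a m, cc a (- m) = cc a m.
Proof. intros. unfold cc. destruct (Z.eq_dec (-m) 0), (Z.eq_dec m 0); try lia; auto. replace (Z.abs_nat (-m)) with (Z.abs_nat m) by lia. auto. Qed.

Lemma IZR_abs_nat : forall m, IZR (Z.abs m) = INR (Z.abs_nat m).
Proof. intros. rewrite INR_IZR_INZ. f_equal. lia. Qed.

Lemma cc_abs_le : forall a p m, 1 < a -> cc a m * Rabs (IZR m) ^ p <= ww a p m.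
Proof.
  intros. unfold ww. rewrite Rmult_comm. apply Rmult_le_compat.
  apply pow_le, Rabs_pos. apply cc_nonneg; auto.
  rewrite Rabs_Zabs, IZR_abs_nat. lra.
  pose proof (cc_le a m H). unfold ww in H0; simpl in H0; lra.
Qed.

Lemma LIP : forall (g : Z -> Cx) n x b,
  (forall i, (i < n)%nat -> Cabs (Csub (g (x + Z.of_nat i)%Z) (g (x + Z.of_nat i + 1)%Z)) <= b) ->
  Cabs (Csub (g x) (g (x + Z.of_nat n)%Z)) <= INR n * b.
Proof.
  induction n; intros x b H.
  - simpl. replace (x + 0)%Z with x by lia. replace (Csub (g x) (g x)) with C0 by (apply Cx_eq; simpl; ring).
    rewrite Cabs_C0; lra.
  - eapply Rle_trans. apply (Cabs_triang3 _ (g (x + Z.of_nat n)%Z)).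
    rewrite S_INR. replace ((INR n + 1) * b) with (INR n * b + b) by ring.
    apply Rplus_le_compat. apply IHn. intros; apply H; lia.
    replace (x + Z.of_nat (S n))%Z with (x + Z.of_nat n + 1)%Z by lia. apply H; lia.
Qed.

Lemma Cabs_Cscal_le : forall r z b, Rabs r * Cabs z <= b -> Cabs (Cscal r z) <= b.
Proof. intros; rewrite Cabs_scal; auto. Qed.

Section Gamma.
Variable gamma : Z -> Cx.
Variables M0 M1 M2 : R.
Hypothesis H0 : forall k, Cabs (gamma k) <= M0.
Hypothesis H1 : forall k, Rabs (IZR k) * Cabs (Defs.Delta gamma k) <= M1.
Hypothesis H2 : forall k, IZR k * IZR k * Cabs (Defs.Delta (Defs.Delta gamma) k) <= M2.

Lemma M0_nonneg : 0 <= M0.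
Proof. pose proof (H0 0%Z); pose proof (Cabs_nonneg (gamma 0%Z)); lra. Qed.

Lemma gdiff_le : forall x y, Cabs (Csub (gamma x) (gamma y)) <= 2 * M0.
Proof. intros. eapply Rle_trans. apply Cabs_sub. pose proof (H0 x); pose proof (H0 y); lra. Qed.

Definition C1c := 4 * (M0 + M1).

Lemma G1_ord : forall x n, Rabs (IZR (2 * x + Z.of_nat n)) * Cabs (Csub (gamma x) (gamma (x + Z.of_nat n)%Z)) <= C1c * INR n.
Proof.
  intros x n. set (s := (2 * x + Z.of_nat n)%Z).
  assert (M1nn : 0 <= M1) by (pose proof (H1 0%Z); pose proof (Cabs_nonneg (Defs.Delta gamma 0%Z)); pose proof (Rabs_pos (IZR 0)); nra).
  pose proof M0_nonneg as M0nn.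
  pose proof (Cabs_nonneg (Csub (gamma x) (gamma (x + Z.of_nat n)%Z))) as Cnn.
  assert (Hn : 0 <= INR n) by apply pos_INR.
  destruct (Z_le_gt_dec (Z.abs s) (2 * Z.of_nat n)) as [Hs|Hs].
  - assert (Rabs (IZR s) <= 2 * INR n).
    { rewrite Rabs_Zabs, INR_IZR_INZ. replace 2 with (IZR 2) by reflexivity. rewrite <- mult_IZR. apply IZR_le. lia. }
    pose proof (gdiff_le x (x + Z.of_nat n)%Z). unfold C1c. nra.
  - assert (Hs0 : IZR s <> 0) by (apply not_0_IZR; lia).
    assert (Habs : 0 < Rabs (IZR s)) by (apply Rabs_pos_lt; auto).
    assert (B : forall i, (i < n)%nat -> Cabs (Csub (gamma (x + Z.of_nat i)%Z) (gamma (x + Z.of_nat i + 1)%Z)) <= 4 * M1 / Rabs (IZR s)).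
    { intros i Hi. set (k := (x + Z.of_nat i)%Z).
      assert (Hk : (Z.abs s <= 4 * Z.abs k)%Z) by (unfold k, s in *; lia).
      assert (Rabs (IZR s) <= 4 * Rabs (IZR k)).
      { rewrite !Rabs_Zabs. replace 4 with (IZR 4) by reflexivity. rewrite <- mult_IZR. apply IZR_le; auto. }
      pose proof (H1 k) as H4. unfold Defs.Delta in H4. pose proof (Cabs_nonneg (Csub (gamma k) (gamma (k + 1)%Z))).
      apply (Rmult_le_reg_l (Rabs (IZR s))); auto. unfold Rdiv. replace (Rabs (IZR s) * (4 * M1 * / Rabs (IZR s))) with (4 * M1) by (field; lra).
      nra. }
    pose proof (LIP gamma n x _ B).
    apply Rle_trans with (Rabs (IZR s) * (INR n * (4 * M1 / Rabs (IZR s)))).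
    apply Rmult_le_compat_l; auto. apply Rabs_pos.
    replace (Rabs (IZR s) * (INR n * (4 * M1 / Rabs (IZR s)))) with (4 * M1 * INR n) by (field; lra).
    unfold C1c. nra.
Qed.

Lemma G1 : forall x y, Cabs (Cscal (IZR x + IZR y) (Csub (gamma y) (gamma x))) <= C1c * Rabs (IZR x - IZR y).
Proof.
  intros x y. rewrite Cabs_scal.
  destruct (Z_le_gt_dec x y).
  - pose proof (G1_ord x (Z.to_nat (y - x))). rewrite Z2Nat.id in H by lia.
    replace (x + (y - x))%Z with y in H by lia. rewrite INR_IZR_INZ, Z2Nat.id in H by lia.
    rewrite Cabs_opp_sub. replace (2 * x + (y - x))%Z with (x + y)%Z in H by lia. rewrite plus_IZR in H.
    rewrite minus_IZR in H. assert (IZR x <= IZR y) by (apply IZR_le; lia).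
    rewrite (Rabs_left1 (IZR x - IZR y)) by lra. replace (- (IZR x - IZR y)) with (IZR y - IZR x) by ring. auto.
  - pose proof (G1_ord y (Z.to_nat (x - y))). rewrite Z2Nat.id in H by lia.
    replace (y + (x - y))%Z with x in H by lia. rewrite INR_IZR_INZ, Z2Nat.id in H by lia.
    replace (2 * y + (x - y))%Z with (x + y)%Z in H by lia. rewrite plus_IZR in H.
    rewrite minus_IZR in H. assert (IZR y <= IZR x) by (apply IZR_le; lia).
    rewrite (Rabs_right (IZR x - IZR y)) by lra. auto.
Qed.

Definition D2f (j p q : Z) : Cx :=
  Cadd (Csub (Csub (gamma j) (gamma (j + p)%Z)) (gamma (j + q)%Z)) (gamma (j + p + q)%Z).

Definition C2c := 16 * (M0 + M2).

Lemma G2_pos : forall j (p q : nat),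
  let s := IZR (2 * j + Z.of_nat p + Z.of_nat q) in
  s * s * Cabs (D2f j (Z.of_nat p) (Z.of_nat q)) <= C2c * ((INR p + INR q) * (INR p + INR q)).
Proof.
  intros j p q s.
  assert (M2nn : 0 <= M2) by (pose proof (H2 0%Z); pose proof (Cabs_nonneg (Defs.Delta (Defs.Delta gamma) 0%Z)); simpl in H; nra).
  pose proof M0_nonneg as M0nn.
  assert (Hp : 0 <= INR p) by apply pos_INR. assert (Hq : 0 <= INR q) by apply pos_INR.
  assert (Dnn := Cabs_nonneg (D2f j (Z.of_nat p) (Z.of_nat q))).
  destruct (Z_le_gt_dec (Z.abs (2 * j + Z.of_nat p + Z.of_nat q)) (2 * (Z.of_nat p + Z.of_nat q))) as [Hs|Hs].
  - assert (A : Rabs s <= 2 * (INR p + INR q)).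
    { unfold s. rewrite Rabs_Zabs, !INR_IZR_INZ. replace 2 with (IZR 2) by reflexivity. rewrite <- plus_IZR, <- mult_IZR. apply IZR_le. lia. }
    assert (D : Cabs (D2f j (Z.of_nat p) (Z.of_nat q)) <= 4 * M0).
    { unfold D2f. eapply Rle_trans. apply Cabs_add. eapply Rle_trans. apply Rplus_le_compat_r. apply Cabs_sub.
      eapply Rle_trans. apply Rplus_le_compat_r. apply Rplus_le_compat_r. apply Cabs_sub.
      pose proof (H0 j). pose proof (H0 (j + Z.of_nat p)%Z). pose proof (H0 (j + Z.of_nat q)%Z). pose proof (H0 (j + Z.of_nat p + Z.of_nat q)%Z). lra. }
    assert (s * s <= 4 * ((INR p + INR q) * (INR p + INR q))).
    { rewrite sq_abs. pose proof (Rabs_pos s). nra. }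
    unfold C2c. assert (0 <= s * s) by nra. nra.
  - assert (Hs0 : s <> 0) by (unfold s; apply not_0_IZR; lia).
    assert (Hss : 0 < s * s) by (apply Rmult_lt_0_compat_sq; auto) || (assert (0 < s*s) by nra; auto).
    set (b2 := 16 * M2 / (s * s)).
    assert (B2 : forall k, (Z.abs (2 * j + Z.of_nat p + Z.of_nat q) <= 4 * Z.abs k)%Z -> Cabs (Defs.Delta (Defs.Delta gamma) k) <= b2).
    { intros k Hk. assert (Rabs s <= 4 * Rabs (IZR k)).
      { unfold s. rewrite !Rabs_Zabs. replace 4 with (IZR 4) by reflexivity. rewrite <- mult_IZR. apply IZR_le; auto. }
      assert (s * s <= 16 * (IZR k * IZR k)).
      { rewrite (sq_abs s), (sq_abs (IZR k)). pose proof (Rabs_pos s). nra. }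
      pose proof (H2 k). pose proof (Cabs_nonneg (Defs.Delta (Defs.Delta gamma) k)).
      apply (Rmult_le_reg_l (s * s)); auto. unfold b2. replace (s * s * (16 * M2 / (s * s))) with (16 * M2) by (field; auto).
      nra. }
    assert (I1 : forall i, (j <= i)%Z -> (i < j + Z.of_nat p)%Z ->
      Cabs (Csub (Csub (gamma i) (gamma (i + Z.of_nat q)%Z)) (Csub (gamma (i + 1)%Z) (gamma (i + 1 + Z.of_nat q)%Z))) <= INR q * b2).
    { intros i Hi1 Hi2.
      replace (Csub (Csub (gamma i) (gamma (i + Z.of_nat q)%Z)) (Csub (gamma (i + 1)%Z) (gamma (i + 1 + Z.of_nat q)%Z)))
        with (Csub (Defs.Delta gamma i) (Defs.Delta gamma (i + Z.of_nat q)%Z)).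
      2:{ unfold Defs.Delta. replace (i + Z.of_nat q + 1)%Z with (i + 1 + Z.of_nat q)%Z by lia. apply Cx_eq; simpl; ring. }
      apply LIP. intros b Hb. apply B2. lia. }
    assert (I2 := LIP (fun i => Csub (gamma i) (gamma (i + Z.of_nat q)%Z)) p j (INR q * b2)
      (fun a Ha => I1 (j + Z.of_nat a)%Z ltac:(lia) ltac:(lia))).
    simpl in I2.
    replace (Csub (Csub (gamma j) (gamma (j + Z.of_nat q)%Z)) (Csub (gamma (j + Z.of_nat p)%Z) (gamma (j + Z.of_nat p + Z.of_nat q)%Z)))
      with (D2f j (Z.of_nat p) (Z.of_nat q)) in I2 by (unfold D2f; apply Cx_eq; simpl; ring).
    apply Rle_trans with (s * s * (INR p * (INR q * b2))). apply Rmult_le_compat_l; nra.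
    unfold b2. replace (s * s * (INR p * (INR q * (16 * M2 / (s * s))))) with (16 * M2 * (INR p * INR q)) by (field; auto).
    unfold C2c. assert (INR p * INR q <= (INR p + INR q) * (INR p + INR q)) by nra.
    assert (0 <= (INR p + INR q) * (INR p + INR q)) by nra.
    apply Rle_trans with (16 * M2 * ((INR p + INR q) * (INR p + INR q))). apply Rmult_le_compat_l; lra.
    apply Rmult_le_compat_r; lra.
Qed.

Lemma D2f_swap : forall j p q, D2f j p q = D2f j q p.
Proof. intros. unfold D2f. replace (j + p + q)%Z with (j + q + p)%Z by lia. apply Cx_eq; simpl; ring. Qed.

Lemma D2f_flip : forall j p q, Cabs (D2f (j + p) (- p) q) = Cabs (D2f j p q).
Proof.
  intros. unfold D2f. replace (j + p + - p)%Z with j by lia. replace (j + p + - p + q)%Z with (j + q)%Z by lia.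
  unfold Cabs, Cnorm2; simpl. f_equal. ring.
Qed.

Lemma G2_natcase : forall j p q, (0 <= p)%Z -> (0 <= q)%Z ->
  IZR (2 * j + p + q) * IZR (2 * j + p + q) * Cabs (D2f j p q) <= C2c * ((IZR (Z.abs p) + IZR (Z.abs q)) * (IZR (Z.abs p) + IZR (Z.abs q))).
Proof.
  intros. pose proof (G2_pos j (Z.to_nat p) (Z.to_nat q)) as H4. cbv zeta in H4.
  rewrite !Z2Nat.id in H4 by lia. rewrite !INR_IZR_INZ, !Z2Nat.id in H4 by lia. rewrite !Z.abs_eq by lia. auto.
Qed.

Lemma G2 : forall j p q,
  IZR (2 * j + p + q) * IZR (2 * j + p + q) * Cabs (D2f j p q) <= C2c * ((IZR (Z.abs p) + IZR (Z.abs q)) * (IZR (Z.abs p) + IZR (Z.abs q))).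
Proof.
  intros j p q. destruct (Z_le_gt_dec 0 p), (Z_le_gt_dec 0 q).
  - apply G2_natcase; auto.
  - rewrite D2f_swap. replace (2 * j + p + q)%Z with (2 * j + q + p)%Z by lia.
    rewrite <- D2f_flip. pose proof (G2_natcase (j + q) (- q) p ltac:(lia) ltac:(lia)).
    replace (2 * (j + q) + - q + p)%Z with (2 * j + q + p)%Z in H by lia. rewrite Z.abs_opp in H. lra.
  - rewrite <- D2f_flip. pose proof (G2_natcase (j + p) (- p) q ltac:(lia) ltac:(lia)).
    replace (2 * (j + p) + - p + q)%Z with (2 * j + p + q)%Z in H by lia. rewrite Z.abs_opp in H. auto.
  - assert (E : D2f j p q = D2f (j + p + q) (- p) (- q)).
    { unfold D2f. replace (j + p + q + - p + - q)%Z with j by lia.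
      replace (j + p + q + - p)%Z with (j + q)%Z by lia. replace (j + p + q + - q)%Z with (j + p)%Z by lia.
      apply Cx_eq; simpl; ring. }
    rewrite E. pose proof (G2_natcase (j + p + q) (- p) (- q) ltac:(lia) ltac:(lia)).
    replace (2 * (j + p + q) + - p + - q)%Z with (2 * j + p + q)%Z in H by lia. rewrite !Z.abs_opp in H. auto.
Qed.

End Gamma.

Definition w1 a m := cc a m * (1 + Rabs (IZR m)).
Definition w2 a m := cc a m * ((1 + Rabs (IZR m)) * (1 + Rabs (IZR m))).

Lemma w1_nonneg : forall a m, 1 < a -> 0 <= w1 a m.
Proof. intros; unfold w1; apply Rmult_le_pos. apply cc_nonneg; auto. pose proof (Rabs_pos (IZR m)); lra. Qed.
Lemma w2_nonneg : forall a m, 1 < a -> 0 <= w2 a m.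
Proof. intros; unfold w2; apply Rmult_le_pos. apply cc_nonneg; auto. pose proof (Rabs_pos (IZR m)); nra. Qed.

Lemma w1_AS : forall a, 1 < a -> AS (w1 a).
Proof.
  intros a Ha. eapply AS_dom; [|apply (AS_plus _ _ (ww_AS a 0 Ha) (ww_AS a 1 Ha))].
  intros m. rewrite Rabs_right by (apply Rle_ge, w1_nonneg; auto). unfold w1.
  pose proof (cc_abs_le a 0 m Ha). pose proof (cc_abs_le a 1 m Ha). simpl in *. lra.
Qed.

Lemma w2_AS : forall a, 1 < a -> AS (w2 a).
Proof.
  intros a Ha. eapply AS_dom; [|apply (AS_plus _ _ (AS_plus _ _ (ww_AS a 0 Ha) (AS_scal _ 2 (ww_AS a 1 Ha))) (ww_AS a 2 Ha))].
  intros m. rewrite Rabs_right by (apply Rle_ge, w2_nonneg; auto). unfold w2.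
  pose proof (cc_abs_le a 0 m Ha). pose proof (cc_abs_le a 1 m Ha). pose proof (cc_abs_le a 2 m Ha). simpl in *. lra.
Qed.

Lemma cc_le_w1 : forall a m, 1 < a -> cc a m <= w1 a m.
Proof. intros; unfold w1. pose proof (cc_nonneg a m H); pose proof (Rabs_pos (IZR m)); nra. Qed.

Lemma ccabs_le_w1 : forall a m, 1 < a -> cc a m * Rabs (IZR m) <= w1 a m.
Proof. intros; unfold w1. pose proof (cc_nonneg a m H); pose proof (Rabs_pos (IZR m)); nra. Qed.

Lemma ccsq_le_w2 : forall a m, 1 < a -> cc a m * (Rabs (IZR m) * Rabs (IZR m)) <= w2 a m.
Proof. intros; unfold w2. pose proof (cc_nonneg a m H); pose proof (Rabs_pos (IZR m)); nra. Qed.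



Lemma cc_le_half : forall a m, 1 < a -> cc a m <= 1.
Proof.
  intros. unfold cc. destruct (Z.eq_dec m 0). lra.
  assert (0 <= / a <= 1).
  { split. left; apply Rinv_0_lt_compat; lra. rewrite <- Rinv_1. apply Rinv_le_contravar; lra. }
  assert ((/a) ^ Z.abs_nat m <= 1 ^ Z.abs_nat m) by (apply pow_incr; lra). rewrite pow1 in H1. lra.
Qed.

Lemma SB_reind_le : forall w c N, AS w -> (forall m, 0 <= w m) -> SB (fun l => w (c - l)%Z) N <= Zsum w.
Proof. intros. rewrite <- (Zsum_reind c w H). apply SB_le_Zsum. apply AS_reind; auto. intros; auto. Qed.
Lemma SB_sub_le : forall w c N, AS w -> (forall m, 0 <= w m) -> SB (fun l => w (l - c)%Z) N <= Zsum w.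
Proof. intros. rewrite <- (Zsum_sub c w H). apply SB_le_Zsum. apply AS_sub; auto. intros; auto. Qed.

Definition cw (w : Z -> R) j k := Zsum (fun l => w (j - l)%Z * w (l - k)%Z).

Lemma cw_box_row : forall w j, AS w -> (forall m, 0 <= w m) ->
  BoxB (fun k l => w (j - l)%Z * w (l - k)%Z) (Zsum w * Zsum w).
Proof.
  intros w j HA Hw N. rewrite SB_exchange.
  erewrite SB_ext. 2:{ intros l. erewrite SB_ext. 2:{ intros k. rewrite Rabs_right by (apply Rle_ge, Rmult_le_pos; auto). reflexivity. }
    rewrite SB_scal. reflexivity. }
  eapply Rle_trans. apply SB_le. intros l. apply Rmult_le_compat_l. auto. apply (SB_reind_le w l N HA Hw).
  erewrite SB_ext. 2:{ intros; rewrite Rmult_comm; reflexivity. } rewrite SB_scal.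
  apply Rmult_le_compat_l. apply Zsum_nonneg; auto. apply SB_reind_le; auto.
Qed.

Lemma cw_box_col : forall w k, AS w -> (forall m, 0 <= w m) ->
  BoxB (fun j l => w (j - l)%Z * w (l - k)%Z) (Zsum w * Zsum w).
Proof.
  intros w k HA Hw N. rewrite SB_exchange.
  erewrite SB_ext. 2:{ intros l. erewrite SB_ext. 2:{ intros j. rewrite Rabs_right by (apply Rle_ge, Rmult_le_pos; auto). rewrite Rmult_comm. reflexivity. }
    rewrite SB_scal. reflexivity. }
  eapply Rle_trans. apply SB_le. intros l. apply Rmult_le_compat_l. auto. apply (SB_sub_le w l N HA Hw).
  erewrite SB_ext. 2:{ intros; rewrite Rmult_comm; reflexivity. } rewrite SB_scal.
  apply Rmult_le_compat_l. apply Zsum_nonneg; auto. apply SB_sub_le; auto.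
Qed.

Lemma Zsum_boxbound : forall F B, BoxB F B -> (forall j k, 0 <= F j k) -> Zsum (fun j => Zsum (F j)) <= B.
Proof.
  intros F B H Hn. destruct (Fubini_col_AS F B H) as [A _]. apply Zsum_bound; auto.
  intros N. eapply Rle_trans; [|apply (BoxB_Pbound F B N H)]. right. apply SB_ext; intros; apply Zsum_ext; intros.
  rewrite Rabs_right; auto. apply Rle_ge; auto.
Qed.

Lemma cw_props : forall w, AS w -> (forall m, 0 <= w m) ->
  (forall j, AS (fun k => cw w j k) /\ Zsum (fun k => cw w j k) <= Zsum w * Zsum w) /\
  (forall k, AS (fun j => cw w j k) /\ Zsum (fun j => cw w j k) <= Zsum w * Zsum w).
Proof.
  intros w HA Hw. split.
  - intros j. pose proof (cw_box_row w j HA Hw) as B. split.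
    + apply (Fubini_col_AS _ _ B).
    + apply (Zsum_boxbound _ _ B). intros; apply Rmult_le_pos; auto.
  - intros k. pose proof (cw_box_col w k HA Hw) as B. split.
    + apply (Fubini_col_AS _ _ B).
    + apply (Zsum_boxbound _ _ B). intros; apply Rmult_le_pos; auto.
Qed.

Lemma SK_of_cw : forall K w c, AS w -> (forall m, 0 <= w m) -> 0 <= c ->
  (forall j k, Cabs (K j k) <= c * cw w j k) -> SK K (c * (Zsum w * Zsum w)).
Proof.
  intros K w c HA Hw Hc H. destruct (cw_props w HA Hw) as [R C]. split.
  - intros j. destruct (R j) as [R1 R2].
    assert (A : AS (fun k => Cabs (K j k))) by (eapply AS_dom; [|apply (AS_scal _ c R1)]; intros; rewrite Rabs_right; auto; apply Rle_ge, Cabs_nonneg).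
    split; auto. eapply Rle_trans. apply Zsum_le; auto. apply (AS_scal _ c R1). intros; apply H.
    rewrite Zsum_scal by auto. apply Rmult_le_compat_l; auto.
  - intros k. destruct (C k) as [R1 R2].
    assert (A : AS (fun j => Cabs (K j k))) by (eapply AS_dom; [|apply (AS_scal _ c R1)]; intros; rewrite Rabs_right; auto; apply Rle_ge, Cabs_nonneg).
    split; auto. eapply Rle_trans. apply Zsum_le; auto. apply (AS_scal _ c R1). intros; apply H.
    rewrite Zsum_scal by auto. apply Rmult_le_compat_l; auto.
Qed.

Definition aK (a : R) (j l : Z) : R := cc a (j - l) * (IZR j + IZR l).
Definition LkK (a : R) (gamma : Z -> Cx) (j l : Z) : Cx := Cscal (aK a j l) (Csub (gamma l) (gamma j)).
Definition LkX (a : R) (gamma : Z -> Cx) (j l : Z) : Cx := Cscal (IZR j - IZR l) (LkK a gamma j l).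
Definition Nsum (a : R) (gamma : Z -> Cx) (j k l : Z) : Cx :=
  Cscal (aK a j l * aK a l k) (Csub (Cadd (gamma j) (gamma k)) (Cscal 2 (gamma l))).
Definition NK (a : R) (gamma : Z -> Cx) (j k : Z) : Cx := ZsumC (fun l => Nsum a gamma j k l).

Lemma RL : forall c s p q d e C2 M0 C1,
  0 <= c -> 0 <= d -> 0 <= e -> 0 <= C2 -> 0 <= M0 -> 0 <= C1 ->
  s * s * d <= C2 * ((Rabs p + Rabs q) * (Rabs p + Rabs q)) -> d <= 4 * M0 -> Rabs s * e <= C1 * Rabs (p - q) ->
  c * Rabs (2 * (s * s) - 2 * (p * q)) * d + c * Rabs (2 * s * (p - q)) * e <=
  c * (2 * C2 + 8 * M0 + 2 * C1) * (((1 + Rabs p) * (1 + Rabs p)) * ((1 + Rabs q) * (1 + Rabs q))).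
Proof.
  intros c s p q d e C2 M0 C1 Hc Hd He HC2 HM0 HC1 G2 D G1.
  set (P := Rabs p) in *. set (Q := Rabs q) in *.
  assert (HP : 0 <= P) by apply Rabs_pos. assert (HQ : 0 <= Q) by apply Rabs_pos.
  assert (A1 : Rabs (2 * (s * s) - 2 * (p * q)) * d <= 2 * C2 * ((P + Q) * (P + Q)) + 8 * M0 * (P * Q)).
  { assert (Rabs (2 * (s * s) - 2 * (p * q)) <= 2 * (s * s) + 2 * (P * Q)).
    { assert (pq : - (P * Q) <= p * q <= P * Q) by (apply Rabs_le_inv; rewrite Rabs_mult; unfold P, Q; lra).
      assert (0 <= s * s) by nra. apply Rabs_le. lra. }
    assert (0 <= P * Q) by nra.
    apply Rle_trans with ((2 * (s * s) + 2 * (P * Q)) * d). apply Rmult_le_compat_r; auto.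
    assert (P * Q * d <= P * Q * (4 * M0)) by (apply Rmult_le_compat_l; auto). replace ((2 * (s * s) + 2 * (P * Q)) * d) with (2 * (s * s * d) + 2 * (P * Q * d)) by ring. lra. }
  assert (A2 : Rabs (2 * s * (p - q)) * e <= 2 * C1 * ((P + Q) * (P + Q))).
  { rewrite !Rabs_mult, (Rabs_right 2) by lra.
    assert (Rabs (p - q) <= P + Q) by (unfold P, Q; unfold Rminus; eapply Rle_trans; [apply Rabs_triang|rewrite Rabs_Ropp; lra]).
    pose proof (Rabs_pos (p - q)). pose proof (Rabs_pos s).
    replace (2 * Rabs s * Rabs (p - q) * e) with (2 * Rabs (p - q) * (Rabs s * e)) by ring.
    apply Rle_trans with (2 * Rabs (p - q) * (C1 * Rabs (p - q))). apply Rmult_le_compat_l; lra.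
    assert (Rabs (p - q) * Rabs (p - q) <= (P + Q) * (P + Q)) by nra. nra. }
  assert (X1 : (P + Q) * (P + Q) <= ((1 + P) * (1 + P)) * ((1 + Q) * (1 + Q))).
  { assert (0 <= P * Q) by nra. assert (0 <= P * Q * (P + Q)) by nra. assert (0 <= P*Q*P*Q) by nra. nra. }
  assert (X2 : P * Q <= ((1 + P) * (1 + P)) * ((1 + Q) * (1 + Q))) by nra.
  apply Rle_trans with (c * (Rabs (2 * (s * s) - 2 * (p * q)) * d + Rabs (2 * s * (p - q)) * e)); [right; ring|].
  apply Rle_trans with (c * ((2 * C2 + 8 * M0 + 2 * C1) * (((1 + P) * (1 + P)) * ((1 + Q) * (1 + Q))))); [|right; ring].
  apply Rmult_le_compat_l; auto.
  set (W := ((1 + P) * (1 + P)) * ((1 + Q) * (1 + Q))). fold W in X1, X2.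
  apply Rle_trans with (2 * C2 * ((P + Q) * (P + Q)) + 8 * M0 * (P * Q) + 2 * C1 * ((P + Q) * (P + Q))). lra.
  assert (2 * C2 * ((P + Q) * (P + Q)) <= 2 * C2 * W) by (apply Rmult_le_compat_l; lra).
  assert (8 * M0 * (P * Q) <= 8 * M0 * W) by (apply Rmult_le_compat_l; lra).
  assert (2 * C1 * ((P + Q) * (P + Q)) <= 2 * C1 * W) by (apply Rmult_le_compat_l; lra). lra.
Qed.

Section Kern.
Variable a : R.
Hypothesis Ha : 1 < a.
Variable gamma : Z -> Cx.
Variables M0 M1 M2 : R.
Hypothesis H0 : forall k, Cabs (gamma k) <= M0.
Hypothesis H1 : forall k, Rabs (IZR k) * Cabs (Defs.Delta gamma k) <= M1.
Hypothesis H2 : forall k, IZR k * IZR k * Cabs (Defs.Delta (Defs.Delta gamma) k) <= M2.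

Lemma M1_nonneg : 0 <= M1.
Proof. pose proof (H1 0%Z); pose proof (Cabs_nonneg (Defs.Delta gamma 0%Z)); rewrite Rabs_R0 in H; lra. Qed.
Lemma M2_nonneg : 0 <= M2.
Proof. pose proof (H2 0%Z); pose proof (Cabs_nonneg (Defs.Delta (Defs.Delta gamma) 0%Z)). lra. Qed.
Lemma C1c_nonneg : 0 <= C1c M0 M1.
Proof. unfold C1c; pose proof M1_nonneg; pose proof (M0_nonneg gamma M0 H0); lra. Qed.
Lemma C2c_nonneg : 0 <= C2c M0 M2.
Proof. unfold C2c; pose proof M2_nonneg; pose proof (M0_nonneg gamma M0 H0); lra. Qed.

Lemma Cabs_scal_mul : forall r t z, Cabs (Cscal (r * t) z) = Rabs r * Cabs (Cscal t z).
Proof. intros. rewrite !Cabs_scal, Rabs_mult. ring. Qed.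

Lemma LkK_bound : forall j l, Cabs (LkK a gamma j l) <= C1c M0 M1 * w1 a (j - l).
Proof.
  intros. unfold LkK, aK. rewrite Cabs_scal_mul. rewrite Rabs_right by (apply Rle_ge, cc_nonneg; auto).
  pose proof (G1 gamma M0 M1 H0 H1 j l). rewrite <- minus_IZR in H.
  pose proof (cc_nonneg a (j - l) Ha). pose proof (ccabs_le_w1 a (j - l) Ha). pose proof C1c_nonneg.
  apply Rle_trans with (cc a (j - l) * (C1c M0 M1 * Rabs (IZR (j - l)))). apply Rmult_le_compat_l; auto.
  replace (cc a (j - l) * (C1c M0 M1 * Rabs (IZR (j - l)))) with (C1c M0 M1 * (cc a (j - l) * Rabs (IZR (j - l)))) by ring.
  apply Rmult_le_compat_l; auto.
Qed.

Lemma LkX_bound : forall j l, Cabs (LkX a gamma j l) <= C1c M0 M1 * w2 a (j - l).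
Proof.
  intros. unfold LkX, LkK, aK. rewrite Cabs_scal, Cabs_scal_mul. rewrite (Rabs_right (cc a _)) by (apply Rle_ge, cc_nonneg; auto).
  pose proof (G1 gamma M0 M1 H0 H1 j l). rewrite <- minus_IZR in *.
  pose proof (cc_nonneg a (j - l) Ha). pose proof (ccsq_le_w2 a (j - l) Ha). pose proof C1c_nonneg.
  pose proof (Rabs_pos (IZR (j - l))).
  apply Rle_trans with (Rabs (IZR (j - l)) * (cc a (j - l) * (C1c M0 M1 * Rabs (IZR (j - l))))).
  apply Rmult_le_compat_l; auto. apply Rmult_le_compat_l; auto.
  replace (Rabs (IZR (j - l)) * (cc a (j - l) * (C1c M0 M1 * Rabs (IZR (j - l))))) with (C1c M0 M1 * (cc a (j - l) * (Rabs (IZR (j - l)) * Rabs (IZR (j - l))))) by ring.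
  apply Rmult_le_compat_l; auto.
Qed.

Lemma D2f_le : forall j p q, Cabs (D2f gamma j p q) <= 4 * M0.
Proof.
  intros. unfold D2f. eapply Rle_trans. apply Cabs_add. eapply Rle_trans. apply Rplus_le_compat_r. apply Cabs_sub.
  eapply Rle_trans. apply Rplus_le_compat_r. apply Rplus_le_compat_r. apply Cabs_sub.
  pose proof (H0 j). pose proof (H0 (j + p)%Z). pose proof (H0 (j + q)%Z). pose proof (H0 (j + p + q)%Z). lra.
Qed.

Definition Cp := 2 * C2c M0 M2 + 8 * M0 + 2 * C1c M0 M1.

Lemma Cp_nonneg : 0 <= Cp.
Proof. unfold Cp. pose proof C1c_nonneg; pose proof C2c_nonneg; pose proof (M0_nonneg gamma M0 H0). lra. Qed.

Lemma pair_est : forall j k l,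
  Cabs (Cadd (Nsum a gamma j k l) (Nsum a gamma j k (j + k - l)%Z)) <= Cp * (w2 a (j - l) * w2 a (l - k)).
Proof.
  intros j k l.
  set (c := cc a (j - l) * cc a (l - k)).
  set (s := IZR j + IZR k). set (p := IZR (l - j)). set (q := IZR (k - l)).
  set (D := D2f gamma j (l - j) (k - l)). set (E := Csub (gamma (j + k - l)%Z) (gamma l)).
  assert (EQ : Cadd (Nsum a gamma j k l) (Nsum a gamma j k (j + k - l)%Z) =
     Cadd (Cscal (c * (2 * (s * s) - 2 * (p * q))) D) (Cscal (c * (2 * s * (p - q))) E)).
  { unfold Nsum, aK, D, E, D2f, c, s, p, q.
    replace (j - (j + k - l))%Z with (l - k)%Z by lia. replace (j + k - l - k)%Z with (j - l)%Z by lia.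
    replace (j + (l - j) + (k - l))%Z with k by lia.
    replace (j + (l - j))%Z with l by lia. replace (j + (k - l))%Z with (j + k - l)%Z by lia.
    rewrite !minus_IZR, !plus_IZR. apply Cx_eq; simpl; ring. }
  rewrite EQ. eapply Rle_trans. apply Cabs_add. rewrite !Cabs_scal, !Rabs_mult.
  assert (Hc : 0 <= c) by (unfold c; apply Rmult_le_pos; apply cc_nonneg; auto).
  rewrite (Rabs_right c) by lra.
  assert (G2' : s * s * Cabs D <= C2c M0 M2 * ((Rabs p + Rabs q) * (Rabs p + Rabs q))).
  { pose proof (G2 gamma M0 M2 H0 H2 j (l - j) (k - l)). fold D in H.
    replace (2 * j + (l - j) + (k - l))%Z with (j + k)%Z in H by lia. rewrite plus_IZR in H. fold s in H.
    unfold p, q. rewrite !Rabs_Zabs. auto. }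
  assert (G1' : Rabs s * Cabs E <= C1c M0 M1 * Rabs (p - q)).
  { pose proof (G1 gamma M0 M1 H0 H1 l (j + k - l)). rewrite Cabs_scal in H. unfold E.
    replace (IZR l + IZR (j + k - l)) with s in H by (unfold s; rewrite minus_IZR, plus_IZR; ring).
    replace (IZR l - IZR (j + k - l)) with (p - q) in H by (unfold p, q; rewrite !minus_IZR, !plus_IZR; ring). auto. }
  pose proof (RL c s p q (Cabs D) (Cabs E) (C2c M0 M2) M0 (C1c M0 M1) Hc (Cabs_nonneg _) (Cabs_nonneg _)
     C2c_nonneg (M0_nonneg gamma M0 H0) C1c_nonneg G2' (D2f_le _ _ _) G1').
  replace (c * Rabs (2 * (s * s) - 2 * (p * q)) * Cabs D + c * Rabs (2 * s * (p - q)) * Cabs E)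
    with (c * Rabs (2 * (s * s) - 2 * (p * q)) * Cabs D + c * (Rabs 2 * Rabs s * Rabs (p - q)) * Cabs E) in H
    by (rewrite <- !Rabs_mult; auto).
  eapply Rle_trans; [|eapply Rle_trans; [apply H|]].
  - right. ring.
  - unfold Cp, c, w2. unfold p, q. rewrite <- (Rabs_Ropp (IZR (l - j))), <- opp_IZR.
    replace (- (l - j))%Z with (j - l)%Z by lia.
    rewrite <- (Rabs_Ropp (IZR (k - l))), <- opp_IZR. replace (- (k - l))%Z with (l - k)%Z by lia. right; ring.
Qed.
End Kern.

Lemma ZsumC_reind : forall c f, ASC f -> ZsumC (fun l => f (c - l)%Z) = ZsumC f.
Proof.
  intros. unfold ZsumC. f_equal.
  apply (Zsum_reind c (fun l => Cre (f l))). apply ASC_re; auto.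
  apply (Zsum_reind c (fun l => Cim (f l))). apply ASC_im; auto.
Qed.

Lemma abs_sum_le_prod : forall u v, 0 <= u -> 0 <= v -> u + v <= (1 + u) * (1 + v).
Proof. intros; nra. Qed.

Section Kern2.
Variable a : R.
Hypothesis Ha : 1 < a.
Variable gamma : Z -> Cx.
Variables M0 M1 M2 : R.
Hypothesis H0 : forall k, Cabs (gamma k) <= M0.
Hypothesis H1 : forall k, Rabs (IZR k) * Cabs (Defs.Delta gamma k) <= M1.
Hypothesis H2 : forall k, IZR k * IZR k * Cabs (Defs.Delta (Defs.Delta gamma) k) <= M2.

Lemma Nsum_bound : forall j k l,
  Cabs (Nsum a gamma j k l) <= 4 * M0 * ((1 + 2 * Rabs (IZR j)) * (1 + Rabs (IZR (j + k)))) * w2 a (j - l).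
Proof.
  intros. unfold Nsum, aK. rewrite Cabs_scal.
  assert (G : Cabs (Csub (Cadd (gamma j) (gamma k)) (Cscal 2 (gamma l))) <= 4 * M0).
  { eapply Rle_trans. apply Cabs_sub. eapply Rle_trans. apply Rplus_le_compat. apply Cabs_add. right; reflexivity.
    rewrite Cabs_scal, Rabs_right by lra. pose proof (H0 j); pose proof (H0 k); pose proof (H0 l). lra. }
  rewrite !Rabs_mult. rewrite (Rabs_right (cc a (j - l))) by (apply Rle_ge, cc_nonneg; auto).
  rewrite (Rabs_right (cc a (l - k))) by (apply Rle_ge, cc_nonneg; auto).
  set (m := Rabs (IZR (j - l))).
  assert (Hm : 0 <= m) by apply Rabs_pos.
  assert (A1 : Rabs (IZR j + IZR l) <= (1 + 2 * Rabs (IZR j)) * (1 + m)).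
  { replace (IZR j + IZR l) with (2 * IZR j - IZR (j - l)) by (rewrite minus_IZR; ring).
    eapply Rle_trans. unfold Rminus. apply Rabs_triang. rewrite Rabs_Ropp, Rabs_mult, (Rabs_right 2) by lra. fold m.
    pose proof (Rabs_pos (IZR j)). nra. }
  assert (A2 : Rabs (IZR l + IZR k) <= (1 + Rabs (IZR (j + k))) * (1 + m)).
  { replace (IZR l + IZR k) with (IZR (j + k) - IZR (j - l)) by (rewrite !minus_IZR, plus_IZR; ring).
    eapply Rle_trans. unfold Rminus. apply Rabs_triang. rewrite Rabs_Ropp. fold m.
    pose proof (Rabs_pos (IZR (j + k))). nra. }
  pose proof (cc_le_half a (l - k) Ha). pose proof (cc_nonneg a (l - k) Ha). pose proof (cc_nonneg a (j - l) Ha).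
  pose proof (Rabs_pos (IZR j + IZR l)). pose proof (Rabs_pos (IZR l + IZR k)).
  pose proof (Cabs_nonneg (Csub (Cadd (gamma j) (gamma k)) (Cscal 2 (gamma l)))).
  pose proof (M0_nonneg gamma M0 H0). pose proof (Rabs_pos (IZR j)). pose proof (Rabs_pos (IZR (j + k))).
  unfold w2. fold m.
  set (A := Rabs (IZR j + IZR l)) in *. set (B := Rabs (IZR l + IZR k)) in *.
  set (g := Cabs (Csub (Cadd (gamma j) (gamma k)) (Cscal 2 (gamma l)))) in *.
  set (c1 := cc a (j - l)) in *. set (c2 := cc a (l - k)) in *.
  set (u := 1 + 2 * Rabs (IZR j)) in *. set (v := 1 + Rabs (IZR (j + k))) in *.
  assert (0 <= u) by (unfold u; lra). assert (0 <= v) by (unfold v; lra).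
  apply Rle_trans with (c1 * A * (c2 * B) * (4 * M0)). apply Rmult_le_compat_l; auto. apply Rmult_le_pos; apply Rmult_le_pos; auto.
  assert (c2 * B <= B) by nra.
  assert (c1 * A * (c2 * B) <= c1 * (u * (1 + m)) * (v * (1 + m))).
  { apply Rmult_le_compat. apply Rmult_le_pos; auto. apply Rmult_le_pos; auto. apply Rmult_le_compat_l; auto. lra. }
  assert (0 <= c1 * A * (c2 * B)) by (apply Rmult_le_pos; apply Rmult_le_pos; auto).
  apply Rle_trans with (c1 * (u * (1 + m)) * (v * (1 + m)) * (4 * M0)). apply Rmult_le_compat_r; lra.
  right; ring.
Qed.

Lemma Nsum_ASC : forall j k, ASC (fun l => Nsum a gamma j k l).
Proof.
  intros. eapply ASC_dom. apply Nsum_bound. apply AS_scal. apply AS_reind. apply w2_AS; auto.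
Qed.

Lemma NK_bound : forall j k, Cabs (NK a gamma j k) <= Cp M0 M1 M2 / 2 * cw (w2 a) j k.
Proof.
  intros j k. unfold NK.
  set (X := fun l => Nsum a gamma j k l).
  assert (AX : ASC X) by apply Nsum_ASC.
  assert (AX' : ASC (fun l => X (j + k - l)%Z)).
  { unfold ASC. apply (AS_reind (j + k) (fun l => Cabs (X l))). auto. }
  assert (E : ZsumC X = Cscal (/2) (ZsumC (fun l => Cadd (X l) (X (j + k - l)%Z)))).
  { rewrite ZsumC_add by auto. rewrite (ZsumC_reind (j + k) X AX). apply Cx_eq; simpl; field. }
  fold X. rewrite E, Cabs_scal, Rabs_right by lra.
  pose proof (cw_box_row (w2 a) j (w2_AS a Ha) (fun m => w2_nonneg a m Ha)) as BB.
  pose proof (BoxB_row _ _ k BB) as R. simpl in R.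
  assert (R' := R).
  apply Rle_trans with (/2 * Zsum (fun l => Cp M0 M1 M2 * (w2 a (j - l) * w2 a (l - k)))).
  - apply Rmult_le_compat_l. lra. eapply Rle_trans. apply ZsumC_abs. apply ASC_add; auto.
    apply Zsum_le. apply ASC_add; auto. apply AS_scal; auto. intros l. apply (pair_est a Ha gamma M0 M1 M2 H0 H1 H2).
  - rewrite Zsum_scal by auto. unfold cw. right; field.
Qed.

Lemma SK_LkK : SK (LkK a gamma) (C1c M0 M1 * Zsum (w1 a)).
Proof.
  rewrite <- Zsum_scal by (apply w1_AS; auto). apply SK_of_W. intros; eapply LkK_bound; eauto.
  apply AS_scal, w1_AS; auto.
Qed.

Lemma SK_LkX : SK (LkX a gamma) (C1c M0 M1 * Zsum (w2 a)).
Proof.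
  rewrite <- Zsum_scal by (apply w2_AS; auto). apply SK_of_W. intros; eapply LkX_bound; eauto.
  apply AS_scal, w2_AS; auto.
Qed.

Lemma SK_NK : SK (NK a gamma) (Cp M0 M1 M2 / 2 * (Zsum (w2 a) * Zsum (w2 a))).
Proof.
  apply SK_of_cw. apply w2_AS; auto. intros; apply w2_nonneg; auto.
  pose proof (Cp_nonneg gamma M0 M1 M2 H0 H1 H2). lra.
  apply NK_bound.
Qed.
End Kern2.

Lemma BoxB_dom : forall F G B, (forall j l, Rabs (F j l) <= G j l) -> BoxB G B -> BoxB F B.
Proof.
  intros F G B H HG N. eapply Rle_trans; [|apply (HG N)]. apply SB_le; intros j; apply SB_le; intros l.
  eapply Rle_trans. apply H. apply Rle_abs.
Qed.

Lemma BoxB_bil : forall W f g, AS W -> (forall m, 0 <= W m) -> (forall k, 0 <= f k) -> (forall k, 0 <= g k) ->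
  AS (fun k => f k * f k) -> AS (fun k => g k * g k) ->
  BoxB (fun j l => W (j - l)%Z * g j * f l) (Zsum W * (Zsum (fun k => g k * g k) + Zsum (fun k => f k * f k)) / 2).
Proof.
  intros W f g HW Wn fn gn Af Ag N.
  apply Rle_trans with (SB (fun j => SB (fun l => / 2 * (W (j - l)%Z * (g j * g j)) + / 2 * (W (j - l)%Z * (f l * f l))) N) N).
  apply SB_le; intros j. apply SB_le; intros l.
  rewrite Rabs_right by (apply Rle_ge; repeat apply Rmult_le_pos; auto).
  pose proof (Wn (j - l)%Z). pose proof (Rle_0_sqr (g j - f l)). unfold Rsqr in *.
  pose proof (fn l); pose proof (gn j).
  assert (W (j - l)%Z * (2 * (g j * f l)) <= W (j - l)%Z * (g j * g j + f l * f l)) by (apply Rmult_le_compat_l; lra).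
  replace (/ 2 * (W (j - l)%Z * (g j * g j)) + / 2 * (W (j - l)%Z * (f l * f l))) with (/ 2 * (W (j - l)%Z * (g j * g j + f l * f l))) by ring.
  apply Rle_trans with (/ 2 * (W (j - l)%Z * (2 * (g j * f l)))). right; field. apply Rmult_le_compat_l; lra.
  rewrite (SB_ext (fun j => SB (fun l => / 2 * (W (j - l)%Z * (g j * g j)) + / 2 * (W (j - l)%Z * (f l * f l))) N)
     (fun j => / 2 * SB (fun l => W (j - l)%Z * (g j * g j)) N + / 2 * SB (fun l => W (j - l)%Z * (f l * f l)) N)).
  2:{ intros j. rewrite SB_plus. rewrite (SB_scal (fun l => W (j - l)%Z * (g j * g j))).
      rewrite (SB_scal (fun l => W (j - l)%Z * (f l * f l))). reflexivity. }
  rewrite SB_plus. rewrite (SB_scal (fun j => SB (fun l => W (j - l)%Z * (g j * g j)) N)).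
  rewrite (SB_scal (fun j => SB (fun l => W (j - l)%Z * (f l * f l)) N)).
  assert (S1 : SB (fun j => SB (fun l => W (j - l)%Z * (g j * g j)) N) N <= Zsum W * Zsum (fun k => g k * g k)).
  { rewrite (SB_ext (fun j => SB (fun l => W (j - l)%Z * (g j * g j)) N) (fun j => g j * g j * SB (fun l => W (j - l)%Z) N)).
    2:{ intros j. rewrite <- SB_scal. apply SB_ext; intros; ring. }
    apply Rle_trans with (SB (fun j => g j * g j * Zsum W) N).
    apply SB_le. intros j. apply Rmult_le_compat_l. pose proof (gn j); apply Rmult_le_pos; lra.
    apply (SB_reind_le W j N HW Wn).
    rewrite (SB_ext (fun j => g j * g j * Zsum W) (fun j => Zsum W * (g j * g j))) by (intros; ring).
    rewrite SB_scal. apply Rmult_le_compat_l. apply Zsum_nonneg; auto.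
    apply SB_le_Zsum; auto. intros k; pose proof (gn k); apply Rmult_le_pos; lra. }
  assert (S2 : SB (fun j => SB (fun l => W (j - l)%Z * (f l * f l)) N) N <= Zsum W * Zsum (fun k => f k * f k)).
  { rewrite SB_exchange.
    rewrite (SB_ext (fun l => SB (fun j => W (j - l)%Z * (f l * f l)) N) (fun l => f l * f l * SB (fun j => W (j - l)%Z) N)).
    2:{ intros l. rewrite <- SB_scal. apply SB_ext; intros; ring. }
    apply Rle_trans with (SB (fun l => f l * f l * Zsum W) N).
    apply SB_le. intros l. apply Rmult_le_compat_l. pose proof (fn l); apply Rmult_le_pos; lra.
    apply (SB_sub_le W l N HW Wn).
    rewrite (SB_ext (fun l => f l * f l * Zsum W) (fun l => Zsum W * (f l * f l))) by (intros; ring).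
    rewrite SB_scal. apply Rmult_le_compat_l. apply Zsum_nonneg; auto.
    apply SB_le_Zsum; auto. intros k; pose proof (fn k); apply Rmult_le_pos; lra. }
  lra.
Qed.

Lemma Cmul_comm : forall z w, Cmul z w = Cmul w z.
Proof. intros; apply Cx_eq; simpl; ring. Qed.

Lemma Xop_abs : forall u l, Cabs (Xop u l) = Rabs (IZR l) * Cabs (u l).
Proof. intros; unfold Xop; apply Cabs_scal. Qed.

Lemma sqrt_sq_abs : forall x, sqrt (x * x) = Rabs x.
Proof. intros. apply sqrt_Rsqr_abs. Qed.

Section A0sec.
Variable a : R.
Hypothesis Ha : 1 < a.

Lemma aK_sym : forall j l, aK a j l = aK a l j.
Proof. intros; unfold aK. replace (l - j)%Z with (- (j - l))%Z by lia. rewrite cc_even. ring. Qed.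

Lemma aK_split : forall j l, Rabs (aK a j l) <= w1 a (j - l) * (1 + 2 * Rabs (IZR l)).
Proof.
  intros. unfold aK. rewrite Rabs_mult, (Rabs_right (cc a _)) by (apply Rle_ge, cc_nonneg; auto).
  replace (IZR j + IZR l) with (IZR (j - l) + 2 * IZR l) by (rewrite minus_IZR; ring).
  pose proof (Rabs_triang (IZR (j - l)) (2 * IZR l)). rewrite Rabs_mult, (Rabs_right 2) in H by lra.
  pose proof (cc_nonneg a (j - l) Ha). unfold w1. pose proof (Rabs_pos (IZR (j - l))). pose proof (Rabs_pos (IZR l)).
  apply Rle_trans with (cc a (j - l) * (Rabs (IZR (j - l)) + 2 * Rabs (IZR l))). apply Rmult_le_compat_l; auto.
  rewrite Rmult_assoc. apply Rmult_le_compat_l; auto.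
  set (x := Rabs (IZR (j - l))) in *. set (y := Rabs (IZR l)) in *.
  assert (0 <= x * y) by (apply Rmult_le_pos; auto). lra.
Qed.

Lemma A0_term_bound : forall u j l, domX u ->
  Cabs (Cscal (aK a j l) (u l)) <= w1 a (j - l) * (l2norm u + 2 * l2norm (Xop u)).
Proof.
  intros u j l [Hu HX]. rewrite Cabs_scal. pose proof (aK_split j l).
  pose proof (l2_term u l Hu). pose proof (l2_term (Xop u) l HX). rewrite Xop_abs in H1.
  pose proof (w1_nonneg a (j - l) Ha). pose proof (Cabs_nonneg (u l)). pose proof (Rabs_pos (IZR l)).
  apply Rle_trans with (w1 a (j - l) * (1 + 2 * Rabs (IZR l)) * Cabs (u l)). apply Rmult_le_compat_r; auto.
  rewrite Rmult_assoc. apply Rmult_le_compat_l; auto. lra.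
Qed.

Lemma A0_ASC : forall u j, domX u -> ASC (fun l => Cscal (aK a j l) (u l)).
Proof.
  intros. eapply ASC_dom. intros l; apply A0_term_bound; auto.
  refine (AS_ext _ _ _ (AS_scal _ (l2norm u + 2 * l2norm (Xop u)) (AS_reind j _ (w1_AS a Ha)))).
  intros; simpl; ring.
Qed.

Lemma A0_kernel : forall u j, domX u -> A0 a u j = ZsumC (fun l => Cscal (aK a j l) (u l)).
Proof.
  intros u j Hu. unfold A0. rewrite <- (ZsumC_reind j _ (A0_ASC u j Hu)).
  apply ZsumC_ext. intros m. unfold aK, Tpow, Xop. replace (j - (j - m))%Z with m by lia.
  unfold cc. destruct (Z.eq_dec m 0).
  - apply Cx_eq; simpl; ring.
  - rewrite minus_IZR. apply Cx_eq; simpl; ring.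
Qed.

Definition K1 (j l : Z) : Cx := mkC (2 * cc a (j - l)) 0.
Definition K2 (j l : Z) : Cx := mkC (cc a (j - l) * IZR (j - l)) 0.

Lemma SK_K1 : SK K1 (Zsum (fun m => 2 * w1 a m)).
Proof.
  apply SK_of_W. intros. unfold K1, Cabs, Cnorm2; simpl. rewrite Rmult_0_l, Rplus_0_r, sqrt_square.
  pose proof (cc_le_w1 a (j - l) Ha); lra. pose proof (cc_nonneg a (j - l) Ha); lra.
  apply AS_scal, w1_AS; auto.
Qed.

Lemma SK_K2 : SK K2 (Zsum (w1 a)).
Proof.
  apply SK_of_W. intros. unfold K2, Cabs, Cnorm2; simpl. rewrite Rmult_0_l, Rplus_0_r, sqrt_sq_abs, Rabs_mult.
  rewrite (Rabs_right (cc a _)) by (apply Rle_ge, cc_nonneg; auto). apply ccabs_le_w1; auto.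
  apply w1_AS; auto.
Qed.

Lemma A0_decomp : forall u j, domX u -> A0 a u j = Cadd (Kop K1 (Xop u) j) (Kop K2 u j).
Proof.
  intros u j Hu. rewrite A0_kernel by auto. unfold Kop.
  rewrite <- ZsumC_add. apply ZsumC_ext; intros l. unfold K1, K2, aK, Xop. rewrite minus_IZR. apply Cx_eq; simpl; ring.
  eapply Kop_row. apply SK_K1. apply Hu. eapply Kop_row. apply SK_K2. apply Hu.
Qed.

Lemma A0_l2 : forall u, domX u -> in_l2 (A0 a u).
Proof.
  intros u Hu. eapply in_l2_ext. intros j; symmetry; apply A0_decomp; auto.
  apply (in_l2_add (Kop K1 (Xop u)) (Kop K2 u)).
  apply (Kop_l2 _ _ _ SK_K1). apply Hu. apply (Kop_l2 _ _ _ SK_K2). apply Hu.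
Qed.

Lemma A0_sym : forall u w, domX u -> domX w -> inner (A0 a u) w = inner u (A0 a w).
Proof.
  intros u w Hu Hw. unfold inner.
  set (F := fun j l => Cmul (w j) (Cconj (Cscal (aK a j l) (u l)))).
  assert (BB : BoxBC F (Zsum (w1 a) * (Zsum (fun k => Cabs (w k) * Cabs (w k)) +
        Zsum (fun k => (Cabs (u k) + 2 * Cabs (Xop u k)) * (Cabs (u k) + 2 * Cabs (Xop u k)))) / 2)).
  { unfold BoxBC. eapply BoxB_dom; [|apply BoxB_bil].
    - intros j l. unfold F. rewrite Rabs_right by (apply Rle_ge, Cabs_nonneg).
      rewrite Cabs_mul, Cabs_conj, Cabs_scal. pose proof (aK_split j l). rewrite Xop_abs.
      pose proof (Cabs_nonneg (w j)). pose proof (Cabs_nonneg (u l)). pose proof (Rabs_pos (IZR l)). pose proof (Rabs_pos (aK a j l)).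
      pose proof (w1_nonneg a (j - l) Ha).
      replace (w1 a (j - l) * Cabs (w j) * (Cabs (u l) + 2 * (Rabs (IZR l) * Cabs (u l)))) with
        (Cabs (w j) * (w1 a (j - l) * (1 + 2 * Rabs (IZR l)) * Cabs (u l))) by ring.
      apply Rmult_le_compat_l; auto. apply Rmult_le_compat_r; auto.
    - apply w1_AS; auto.
    - intros; apply w1_nonneg; auto.
    - intros; pose proof (Cabs_nonneg (u k)); pose proof (Cabs_nonneg (Xop u k)); lra.
    - intros; apply Cabs_nonneg.
    - destruct Hu as [Hu1 Hu2]. apply in_l2_AS in Hu1; apply in_l2_AS in Hu2.
      eapply AS_dom; [|apply (AS_plus _ _ (AS_scal _ 2 Hu1) (AS_scal _ 8 Hu2))].
      intros k. cbv beta. rewrite !Cnorm2_abs. pose proof (Cabs_nonneg (u k)); pose proof (Cabs_nonneg (Xop u k)).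
      set (x := Cabs (u k)) in *. set (y := Cabs (Xop u k)) in *.
      rewrite Rabs_right by (apply Rle_ge, Rmult_le_pos; lra). pose proof (Rle_0_sqr (x - 2 * y)). unfold Rsqr in *. lra.
    - destruct Hw as [Hw1 _]. apply in_l2_AS in Hw1. refine (AS_ext _ _ _ Hw1). intros; simpl; rewrite Cnorm2_abs; auto. }
  transitivity (ZsumC (fun j => ZsumC (fun l => F j l))).
  { apply ZsumC_ext; intros j. rewrite A0_kernel by auto. rewrite <- ZsumC_conj by (apply A0_ASC; auto).
    rewrite Cmul_comm. rewrite <- ZsumC_mul. reflexivity. apply ASC_ext with (fun l => Cconj (Cscal (aK a j l) (u l))); auto.
    eapply ASC_dom; [|apply (A0_ASC u j Hu)]. intros; rewrite Cabs_conj; lra. }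
  rewrite (FubiniC F _ BB). apply ZsumC_ext; intros l. rewrite A0_kernel by auto.
  rewrite <- ZsumC_mul by (apply A0_ASC; auto). apply ZsumC_ext; intros j. unfold F. rewrite aK_sym.
  apply Cx_eq; simpl; ring.
Qed.
End A0sec.

Lemma BoxB_scal : forall F B c, 0 <= c -> BoxB F B -> BoxB (fun j l => c * F j l) (c * B).
Proof.
  intros F B c Hc H N.
  rewrite (SB_ext (fun j => SB (fun l => Rabs (c * F j l)) N) (fun j => c * SB (fun l => Rabs (F j l)) N)).
  2:{ intros j. rewrite <- SB_scal. apply SB_ext; intros l. rewrite Rabs_mult, (Rabs_right c) by lra. reflexivity. }
  rewrite SB_scal. apply Rmult_le_compat_l; auto.
Qed.

Lemma BoxBC_colASC : forall F B, BoxBC F B -> ASC (fun j => ZsumC (F j)) /\ ASC (fun k => ZsumC (fun j => F j k)).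
Proof.
  intros F B H. split.
  - destruct (Fubini_col_AS _ _ H) as [_ A]. eapply ASC_dom; [|apply A]. intros j.
    eapply Rle_trans. apply ZsumC_abs. eapply BoxBC_row; eauto. right; apply Zsum_ext; intros; rewrite Rabs_right; auto; apply Rle_ge, Cabs_nonneg.
  - pose proof (BoxB_trans _ _ H) as H'. destruct (Fubini_col_AS _ _ H') as [_ A]. eapply ASC_dom; [|apply A]. intros k.
    eapply Rle_trans. apply ZsumC_abs. unfold ASC. apply (BoxB_row _ _ k H'). right; apply Zsum_ext; intros; rewrite Rabs_right; auto; apply Rle_ge, Cabs_nonneg.
Qed.

Lemma inner_sub_r' : forall phi psi1 psi2, in_l2 phi -> in_l2 psi1 -> in_l2 psi2 ->
  Csub (inner phi psi1) (inner phi psi2) = inner phi (vsub psi1 psi2).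
Proof. intros; symmetry; apply inner_sub_r; auto. Qed.

Section Main.
Variable a : R.
Hypothesis Ha : 1 < a.
Variable gamma : Z -> Cx.
Variables M0 M1 M2 : R.
Hypothesis H0 : forall k, Cabs (gamma k) <= M0.
Hypothesis H1 : forall k, Rabs (IZR k) * Cabs (Defs.Delta gamma k) <= M1.
Hypothesis H2 : forall k, IZR k * IZR k * Cabs (Defs.Delta (Defs.Delta gamma) k) <= M2.

Definition SL := C1c M0 M1 * Zsum (w1 a).
Definition LL := Kop (LkK a gamma).

Lemma D_domX : forall v, domX v -> domX (Dop gamma v).
Proof.
  intros v [Hv HX]. split. apply (in_l2_mul gamma v M0); auto.
  eapply in_l2_ext. 2: apply (in_l2_mul gamma (Xop v) M0); auto.
  intros k; unfold Xop, Dop; apply Cx_eq; simpl; ring.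
Qed.

Lemma D_comm : forall v, domX v -> vsub (A0 a (Dop gamma v)) (Dop gamma (A0 a v)) = LL v.
Proof.
  intros v Hv. apply functional_extensionality; intros j. unfold vsub, LL, Kop, Dop at 2.
  rewrite !A0_kernel; auto. 2: apply D_domX; auto.
  rewrite <- ZsumC_mul by (apply A0_ASC; auto).
  rewrite <- ZsumC_sub. apply ZsumC_ext; intros l. unfold LkK, Dop. apply Cx_eq; simpl; ring.
  apply (A0_ASC a Ha (Dop gamma v)). apply D_domX; auto. apply ASC_mul, A0_ASC; auto.
Qed.

Lemma D_identity : forall u v, domX u -> domX v ->
  Csub (inner (A0 a u) (Dop gamma v)) (inner u (Dop gamma (A0 a v))) = inner u (LL v).
Proof.
  intros u v Hu Hv. rewrite (A0_sym a Ha u (Dop gamma v) Hu (D_domX v Hv)).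
  rewrite inner_sub_r'. rewrite D_comm; auto. apply Hu. apply A0_l2; auto. apply D_domX; auto.
  apply (in_l2_mul gamma _ M0); auto. apply A0_l2; auto.
Qed.

Lemma LL_domX : forall v, domX v -> domX (LL v).
Proof.
  intros v [Hv HX]. pose proof (SK_LkK a Ha gamma M0 M1 H0 H1) as S1.
  pose proof (SK_LkX a Ha gamma M0 M1 H0 H1) as S2.
  split. apply (Kop_l2 _ _ _ S1); auto.
  eapply in_l2_ext. 2: apply (in_l2_add (Kop (LkK a gamma) (Xop v)) (Kop (LkX a gamma) v)); [apply (Kop_l2 _ _ _ S1)|apply (Kop_l2 _ _ _ S2)]; auto.
  intros j. unfold vadd, LL, Kop. unfold Xop at 2. rewrite <- ZsumC_add. rewrite <- ZsumC_scal.
  apply ZsumC_ext; intros l. unfold LkX, Xop. apply Cx_eq; simpl; ring.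
  eapply Kop_row; eauto. eapply Kop_row; eauto. eapply Kop_row; eauto.
Qed.

Lemma aK_bound_j : forall j l, Rabs (aK a j l) <= (1 + 2 * Rabs (IZR j)) * w1 a (j - l).
Proof.
  intros. unfold aK, w1. rewrite Rabs_mult, (Rabs_right (cc a _)) by (apply Rle_ge, cc_nonneg; auto).
  replace (IZR j + IZR l) with (2 * IZR j - IZR (j - l)) by (rewrite minus_IZR; ring).
  pose proof (Rabs_triang (2 * IZR j) (- IZR (j - l))). rewrite Rabs_Ropp, Rabs_mult, (Rabs_right 2) in H by lra.
  pose proof (cc_nonneg a (j - l) Ha). pose proof (Rabs_pos (IZR (j - l))). pose proof (Rabs_pos (IZR j)).
  apply Rle_trans with (cc a (j - l) * (2 * Rabs (IZR j) + Rabs (IZR (j - l)))). apply Rmult_le_compat_l; auto.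
  apply Rle_trans with (cc a (j - l) * ((1 + 2 * Rabs (IZR j)) * (1 + Rabs (IZR (j - l))))); [|right; ring].
  apply Rmult_le_compat_l; auto. set (x := Rabs (IZR j)) in *. set (y := Rabs (IZR (j - l))) in *.
  assert (0 <= x * y) by (apply Rmult_le_pos; auto). lra.
Qed.

Lemma L_comm : forall v, domX v -> vsub (A0 a (LL v)) (LL (A0 a v)) = Kop (NK a gamma) v.
Proof.
  intros v Hv. pose proof (SK_LkK a Ha gamma M0 M1 H0 H1) as S1.
  assert (HLv := LL_domX v Hv). destruct Hv as [Hv1 Hv2].
  apply functional_extensionality; intros j. unfold vsub.
  set (F1 := fun l k => Cscal (aK a j l) (Cmul (LkK a gamma l k) (v k))).
  set (F2 := fun l k => Cmul (LkK a gamma j l) (Cscal (aK a l k) (v k))).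
  set (V := l2norm v + 2 * l2norm (Xop v)).
  assert (HV : 0 <= V) by (unfold V; pose proof (l2norm_nonneg v); pose proof (l2norm_nonneg (Xop v)); lra).
  assert (CN := C1c_nonneg gamma M0 M1 H0 H1).
  assert (WW := BoxB_trans _ _ (cw_box_row (w1 a) j (w1_AS a Ha) (fun m => w1_nonneg a m Ha))).
  simpl in WW.
  assert (B1 : BoxBC F1 (((1 + 2 * Rabs (IZR j)) * C1c M0 M1 * l2norm v) * (Zsum (w1 a) * Zsum (w1 a)))).
  { unfold BoxBC. eapply BoxB_dom; [|apply BoxB_scal; [|apply WW]].
    - intros l k. rewrite Rabs_right by (apply Rle_ge, Cabs_nonneg). unfold F1. rewrite Cabs_scal, Cabs_mul.
      pose proof (aK_bound_j j l). pose proof (LkK_bound a Ha gamma M0 M1 H0 H1 l k). pose proof (l2_term v k Hv1).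
      pose proof (w1_nonneg a (j - l) Ha). pose proof (w1_nonneg a (l - k) Ha).
      pose proof (Cabs_nonneg (v k)). pose proof (Cabs_nonneg (LkK a gamma l k)). pose proof (Rabs_pos (IZR j)).
      apply Rle_trans with (((1 + 2 * Rabs (IZR j)) * w1 a (j - l)) * ((C1c M0 M1 * w1 a (l - k)) * l2norm v)).
      apply Rmult_le_compat; auto. apply Rabs_pos. apply Rmult_le_pos; auto. apply Rmult_le_compat; auto.
      right; ring.
    - pose proof (Rabs_pos (IZR j)). pose proof (l2norm_nonneg v). apply Rmult_le_pos; auto. apply Rmult_le_pos; auto. lra. }
  assert (B2 : BoxBC F2 ((C1c M0 M1 * V) * (Zsum (w1 a) * Zsum (w1 a)))).
  { unfold BoxBC. eapply BoxB_dom; [|apply BoxB_scal; [|apply WW]].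
    - intros l k. rewrite Rabs_right by (apply Rle_ge, Cabs_nonneg). unfold F2. rewrite Cabs_mul.
      pose proof (LkK_bound a Ha gamma M0 M1 H0 H1 j l). pose proof (A0_term_bound a Ha v l k (conj Hv1 Hv2)) as H4. fold V in H4.
      pose proof (w1_nonneg a (j - l) Ha). pose proof (w1_nonneg a (l - k) Ha).
      apply Rle_trans with ((C1c M0 M1 * w1 a (j - l)) * (w1 a (l - k) * V)).
      apply Rmult_le_compat; auto. apply Cabs_nonneg. apply Cabs_nonneg. right; ring.
    - apply Rmult_le_pos; auto. }
  destruct (BoxBC_colASC _ _ B1) as [R1 C1'].
  destruct (BoxBC_colASC _ _ B2) as [R2 C2'].
  assert (E1 : A0 a (LL v) j = ZsumC (fun k => ZsumC (fun l => F1 l k))).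
  { rewrite A0_kernel by auto. rewrite <- (FubiniC F1 _ B1). apply ZsumC_ext; intros l.
    unfold LL, Kop. rewrite <- ZsumC_scal. reflexivity. eapply Kop_row; eauto. }
  assert (E2 : LL (A0 a v) j = ZsumC (fun k => ZsumC (fun l => F2 l k))).
  { unfold LL at 1, Kop. rewrite <- (FubiniC F2 _ B2). apply ZsumC_ext; intros l.
    rewrite (A0_kernel a Ha v l (conj Hv1 Hv2)). rewrite <- ZsumC_mul. reflexivity. apply A0_ASC; auto. exact (conj Hv1 Hv2). }
  rewrite E1, E2. rewrite <- ZsumC_sub by auto. unfold Kop. apply ZsumC_ext; intros k.
  rewrite <- ZsumC_sub. 2: apply (BoxBC_row (fun k l => F1 l k) _ k (BoxB_trans _ _ B1)).
  2: apply (BoxBC_row (fun k l => F2 l k) _ k (BoxB_trans _ _ B2)).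
  unfold NK. rewrite Cmul_comm, <- ZsumC_mul. apply ZsumC_ext; intros l.
  unfold F1, F2, Nsum, LkK. apply Cx_eq; simpl; ring.
  apply Nsum_ASC with M0; auto.
Qed.

Lemma L_identity : forall u v, domX u -> domX v ->
  Csub (inner (A0 a u) (LL v)) (inner u (LL (A0 a v))) = inner u (Kop (NK a gamma) v).
Proof.
  intros u v Hu Hv. pose proof (SK_LkK a Ha gamma M0 M1 H0 H1) as S1.
  rewrite (A0_sym a Ha u (LL v) Hu (LL_domX v Hv)).
  rewrite inner_sub_r'. rewrite L_comm; auto. apply Hu. apply A0_l2; auto. apply LL_domX; auto.
  apply (Kop_l2 _ _ _ S1). apply A0_l2; auto.
Qed.

Theorem main_C2 : Defs.C2 a (Dop gamma).
Proof.
  destruct (Dop_props gamma M0 H0) as [DB DN].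
  pose proof (SK_LkK a Ha gamma M0 M1 H0 H1) as S1.
  pose proof (SK_NK a Ha gamma M0 M1 M2 H0 H1 H2) as S2.
  destruct (C1_of_comm a (Dop gamma) M0 LL _ DB DN (Kop_nice _ _ S1) (A0_l2 a Ha) D_identity) as [CD EQ].
  destruct (C1_of_comm a LL _ (Kop (NK a gamma)) _ (Kop_bounded _ _ S1) (Kop_nice _ _ S1) (Kop_nice _ _ S2) (A0_l2 a Ha) L_identity) as [CL _].
  split; auto. exists LL. split; auto. split; auto. apply (Kop_bounded _ _ S1).
Qed.
End Main.

Theorem mainTheorem9 (a : R) (gamma : Z -> Cx)
  (ha : 1 < a)
  (hbdd : exists M, forall k, Cabs (gamma k) <= M)
  (hq : q_finite 2 gamma) :
  C2 a (Dop gamma).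
Proof.
  destruct hbdd as [M0 H0].
  destruct (hq 1%nat ltac:(lia)) as [M1 H1].
  destruct (hq 2%nat ltac:(lia)) as [M2 H2].
  apply (main_C2 a ha gamma M0 M1 M2 H0).
  - intros k. specialize (H1 k). rewrite Cabs_scal in H1. simpl in H1. rewrite Rmult_1_r in H1. exact H1.
  - intros k. specialize (H2 k). rewrite Cabs_scal in H2. simpl in H2. rewrite Rmult_1_r in H2.
    rewrite Rabs_right in H2. exact H2. apply Rle_ge. apply Rle_0_sqr.
Qed.
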